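(* Let $\mathsf S,\mathsf T$ be trees. A morphism $g:\overline{\mathsf S}\to\overline{\mathsf T}$ in $\mathbf{Tree}$ is generic with respect to the free-monad monad $F$ on $\mathbf{PolyEnd}$ if and only if it is boundary preserving. More precisely: every boundary-preserving morphism between free monads on trees is generic; and if $\mathsf S$ is a tree and $g:\overline{\mathsf S}\to\overline{\mathsf R}$ is generic for a polynomial endofunctor $\mathsf R$, then $\mathsf R$ is (isomorphic to) a tree and $g$ is boundary preserving.
   Context: A polynomial endofunctor is a diagram of sets $P_0\xleftarrow{s}P_2\xrightarrow{p}P_1\xrightarrow{t}P_0$ with $p$ having finite fibres; a morphism is a triple of maps commuting with $s,p,t$ whose middle square is a pullback; these form $\mathbf{PolyEnd}$. $F(\mathsf P)=\overline{\mathsf P}$ denotes the free polynomial monad on $\mathsf P$ (left adjoint to the forgetful functor from polynomial monads). A tree is a polynomial endofunctor with all sets finite, $t$ injective, $s$ injective with singleton complement (the root), and such that iterating $\sigma$ ($\sigma(\mathrm{root})=\mathrm{root}$, $\sigma(e)=t(p(e))$ for $e\in T_2$) brings every edge to the root. For a tree, $\overline{\mathsf T}=(T_0\leftarrow\mathrm{sub}'(\mathsf T)\to\mathrm{sub}(\mathsf T)\to T_0)$ with $\mathrm{sub}$ the set of subtrees and $\mathrm{sub}'$ subtrees with a marked leaf. $\mathbf{Tree}$: objects trees, morphisms monad morphisms $\overline{\mathsf S}\to\overline{\mathsf T}$; these correspond by adjunction to morphisms $\mathsf S\to F\mathsf T$ in $\mathbf{PolyEnd}$. A morphism $g:A\to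 FB$ is generic if for all $a:A\to FC$, $c:C\to D$, $b:B\to D$ with $F(c)\circ a=F(b)\circ g$ there is a unique $u:B\to C$ with $c\circ u=b$ and $F(u)\circ g=a$; a monad map $FA\to FB$ is generic if its adjunct $A\to FB$ is. A morphism $\overline{\mathsf S}\to\overline{\mathsf T}$ is boundary preserving if it sends the maximal subtree $\mathsf S$ to the maximal subtree $\mathsf T$. *)

(* Defs.v *)
From Stdlib Require Import List Relations ClassicalEpsilon.
Import ListNotations.
Set Implicit Arguments.

(** A polynomial endofunctor  P0 <-s- P2 -p-> P1 -t-> P0  (sets = types). *)
Record PolyEnd : Type := mkPoly {
  P0 : Type; P1 : Type; P2 : Type;
  ps : P2 -> P0; pp : P2 -> P1; pt : P1 -> P0 }.

(** [p] has finite fibres (objects of PolyEnd are required to satisfy this). *)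
Definition finitary (P : PolyEnd) : Prop :=
  forall b : P1 P, exists l : list (P2 P), forall e, pp P e = b -> In e l.

(** Morphisms of PolyEnd: commuting triple whose middle square is a pullback. *)
Record Hom (A B : PolyEnd) : Type := mkHom {
  h0 : P0 A -> P0 B; h1 : P1 A -> P1 B; h2 : P2 A -> P2 B;
  h_s : forall e, ps B (h2 e) = h0 (ps A e);
  h_p : forall e, pp B (h2 e) = h1 (pp A e);
  h_t : forall b, pt B (h1 b) = h0 (pt A b);
  h_pb : forall (b : P1 A) (e' : P2 B), pp B e' = h1 b ->
           exists! e : P2 A, pp A e = b /\ h2 e = e' }.

Definition fibre (P : PolyEnd) (b : P1 P) := { e : P2 P | pp P e = b }.

Inductive ptree (P : PolyEnd) : Type :=
| PLeaf : P0 P -> ptree P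
| PNode : forall b : P1 P, (fibre P b -> ptree P) -> ptree P.
Arguments PLeaf {P}.
Arguments PNode {P}.

Definition rc (P : PolyEnd) (tau : ptree P) : P0 P :=
  match tau with PLeaf c => c | PNode b _ => pt P b end.

Fixpoint wc (P : PolyEnd) (tau : ptree P) : Prop :=
  match tau with
  | PLeaf _ => True
  | PNode b ch => forall e : fibre P b, rc (ch e) = ps P (proj1_sig e) /\ wc (ch e)
  end.

(** leaves of a P-tree, given by their address (list of input edges from the root) *)
Fixpoint is_leaf (P : PolyEnd) (tau : ptree P) (l : list (P2 P)) : Prop :=
  match tau, l with
  | PLeaf _, [] => True
  | PNode b ch, e :: l' => exists h : pp P e = b, is_leaf (ch (exist _ e h)) l'
  | _, _ => False
  end.

Definition leafc (P : PolyEnd) (tau : ptree P) (l : list (P2 P)) : P0 P :=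
  match rev l with [] => rc tau | e :: _ => ps P e end.

(** The free polynomial monad  F(P) = (P0 <- trees with marked leaf -> trees -> P0). *)
Definition FP1 (P : PolyEnd) : Type := { tau : ptree P | wc tau }.
Definition FP2 (P : PolyEnd) : Type :=
  { x : FP1 P * list (P2 P) | is_leaf (proj1_sig (fst x)) (snd x) }.
Definition F (P : PolyEnd) : PolyEnd :=
  {| P0 := P0 P; P1 := FP1 P; P2 := FP2 P;
     ps := fun x => leafc (proj1_sig (fst (proj1_sig x))) (snd (proj1_sig x));
     pp := fun x => fst (proj1_sig x);
     pt := fun tau => rc (proj1_sig tau) |}.

(** The inverse of h2 on fibres given by the pullback condition. *)
Definition hinv (A B : PolyEnd) (c : Hom A B) (b : P1 A)
    (e' : fibre B (h1 c b)) : fibre A b :=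
  let X := constructive_indefinite_description _
             (h_pb c b (proj1_sig e') (proj2_sig e')) in
  exist _ (proj1_sig X) (proj1 (proj1 (proj2_sig X))).

Fixpoint fmapT (A B : PolyEnd) (c : Hom A B) (tau : ptree A) : ptree B :=
  match tau with
  | PLeaf x => PLeaf (h0 c x)
  | PNode b ch => PNode (h1 c b) (fun e' => fmapT c (ch (hinv c b e')))
  end.

Definition Fm1 (A B : PolyEnd) (c : Hom A B) (x : FP1 A) : ptree B :=
  fmapT c (proj1_sig x).
Definition Fm2 (A B : PolyEnd) (c : Hom A B) (x : FP2 A) : ptree B * list (P2 B) :=
  (fmapT c (proj1_sig (fst (proj1_sig x))), map (h2 c) (snd (proj1_sig x))).
Definition raw1 (A : PolyEnd) (x : FP1 A) : ptree A := proj1_sig x.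
Definition raw2 (A : PolyEnd) (x : FP2 A) : ptree A * list (P2 A) :=
  (proj1_sig (fst (proj1_sig x)), snd (proj1_sig x)).

(** F(c) o a = F(b) o g  for a : A -> F C, c : C -> D, g : A -> F B, b : B -> D *)
Definition Fcomp_eq (A B C D : PolyEnd) (c : Hom C D) (a : Hom A (F C))
    (b : Hom B D) (g : Hom A (F B)) : Prop :=
  (forall x, h0 c (h0 a x) = h0 b (h0 g x)) /\
  (forall x, Fm1 c (h1 a x) = Fm1 b (h1 g x)) /\
  (forall x, Fm2 c (h2 a x) = Fm2 b (h2 g x)).

(** F(u) o g = a  for g : A -> F B, u : B -> C, a : A -> F C *)
Definition Fcomp_eq1 (A B C : PolyEnd) (u : Hom B C) (g : Hom A (F B))
    (a : Hom A (F C)) : Prop :=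
  (forall x, h0 u (h0 g x) = h0 a x) /\
  (forall x, Fm1 u (h1 g x) = raw1 (h1 a x)) /\
  (forall x, Fm2 u (h2 g x) = raw2 (h2 a x)).

Definition comp_eq (B C D : PolyEnd) (c : Hom C D) (u : Hom B C) (b : Hom B D) : Prop :=
  (forall x, h0 c (h0 u x) = h0 b x) /\
  (forall x, h1 c (h1 u x) = h1 b x) /\
  (forall x, h2 c (h2 u x) = h2 b x).

Definition hom_eq (B C : PolyEnd) (u v : Hom B C) : Prop :=
  (forall x, h0 u x = h0 v x) /\ (forall x, h1 u x = h1 v x) /\
  (forall x, h2 u x = h2 v x).

(** Genericity of g : A -> F B (w.r.t. F), quantifying over objects C, D
    of PolyEnd (finitary polynomial endofunctors). *)
Definition generic (A B : PolyEnd) (g : Hom A (F B)) : Prop :=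
  forall (C D : PolyEnd), finitary C -> finitary D ->
  forall (a : Hom A (F C)) (c : Hom C D) (b : Hom B D),
    Fcomp_eq c a b g ->
    exists u : Hom B C, comp_eq c u b /\ Fcomp_eq1 u g a /\
      forall u' : Hom B C, comp_eq c u' b -> Fcomp_eq1 u' g a -> hom_eq u' u.

Definition finite_type (X : Type) : Prop := exists l : list X, forall x, In x l.

Definition is_root (P : PolyEnd) (r : P0 P) : Prop := ~ exists e, ps P e = r.

Definition sigma_step (P : PolyEnd) (x y : P0 P) : Prop :=
  exists e, ps P e = x /\ y = pt P (pp P e).

Definition is_tree (P : PolyEnd) : Prop :=
  finite_type (P0 P) /\ finite_type (P1 P) /\ finite_type (P2 P) /\
  (forall b b', pt P b = pt P b' -> b = b') /\
  (forall e e', ps P e = ps P e' -> e = e') /\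
  (exists r, is_root P r /\ forall x, is_root P x -> x = r) /\
  (forall x r, is_root P r -> clos_refl_trans _ (@sigma_step P) x r).

(** Monad multiplication / Kleisli extension: grafting. *)
Fixpoint subst (P : PolyEnd) (tau : ptree P) (f : list (P2 P) -> ptree P) : ptree P :=
  match tau with
  | PLeaf _ => f []
  | PNode b ch => PNode b (fun e => subst (ch e) (fun l => f (proj1_sig e :: l)))
  end.

(** The monad morphism  g^# : F S -> F T  adjunct to g : S -> F T, on trees. *)
Fixpoint ext (S T : PolyEnd) (g : Hom S (F T)) (tau : ptree S) : ptree T :=
  match tau with
  | PLeaf x => @PLeaf T (h0 g x)
  | PNode b ch =>
      subst (proj1_sig (h1 g b))
        (fun l =>
           match excluded_middle_informative
                   (exists e : fibre S b, snd (proj1_sig (h2 g (proj1_sig e))) = l) with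
           | left H => ext g (ch (proj1_sig (constructive_indefinite_description _ H)))
           | right _ => @PLeaf T (h0 g (pt S b))
           end)
  end.

Fixpoint node_in (P : PolyEnd) (b : P1 P) (tau : ptree P) : Prop :=
  match tau with
  | PLeaf _ => False
  | PNode b' ch => b' = b \/ exists e, node_in b (ch e)
  end.

Definition is_max_subtree (P : PolyEnd) (tau : ptree P) : Prop :=
  wc tau /\ is_root P (rc tau) /\ forall b : P1 P, node_in b tau.

Definition boundary_preserving (S T : PolyEnd) (g : Hom S (F T)) : Prop :=
  forall tau : ptree S, is_max_subtree tau -> is_max_subtree (ext g tau).

(* Main.v *)
Require Import Defs.
From Stdlib Require Import List Relations ClassicalEpsilon ProofIrrelevance FunctionalExtensionality Lia.
Import ListNotations.
Set Implicit Arguments. Unset Strict Implicit.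

Section Basics.
Variable P : PolyEnd.

Fixpoint At (t : ptree P) (l : list (P2 P)) (t' : ptree P) {struct l} : Prop :=
  match l with
  | [] => t' = t
  | e :: l' => match t with
               | PLeaf _ => False
               | PNode b ch => exists h : pp P e = b, At (ch (exist _ e h)) l' t'
               end
  end.

Definition top (t : ptree P) : P0 P + P1 P :=
  match t with PLeaf x => inl x | PNode b _ => inr b end.

Lemma fib_eq b (e1 e2 : fibre P b) : proj1_sig e1 = proj1_sig e2 -> e1 = e2.
Proof. destruct e1, e2; simpl; intros ->; f_equal; apply proof_irrelevance. Qed.

Lemma At_det t l t1 t2 : At t l t1 -> At t l t2 -> t1 = t2.
Proof.
  revert t; induction l as [|e l IH]; intros t; simpl.
  - intros H1 H2; rewrite H1, H2; reflexivity.
  - destruct t as [x|b ch]; [tauto|]. intros [h1 H1] [h2 H2].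
    assert (h1 = h2) by apply proof_irrelevance. subst. eauto.
Qed.

Lemma At_app t l1 l2 t' : At t (l1 ++ l2) t' <-> exists t1, At t l1 t1 /\ At t1 l2 t'.
Proof.
  revert t; induction l1 as [|e l IH]; intros t; simpl.
  - split; [eauto| intros [t1 [-> H]]; auto].
  - destruct t as [x|b ch].
    + split; [tauto| intros [t1 [[] _]]].
    + split.
      * intros [h H]. apply IH in H. destruct H as [t1 [H1 H2]]. eauto.
      * intros [t1 [[h H1] H2]]. exists h. apply IH. eauto.
Qed.

Lemma At_cons_node b ch (e : fibre P b) l t :
  At (ch e) l t -> At (PNode b ch) (proj1_sig e :: l) t.
Proof. destruct e as [e h]. simpl. intros H. exists h. exact H. Qed.

Lemma ptree_ext (s1 s2 : ptree P) :
  (forall l t1, At s1 l t1 -> exists t2, At s2 l t2 /\ top t1 = top t2) -> s1 = s2.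
Proof.
  revert s2; induction s1 as [x|b ch IH]; intros s2 H.
  - destruct (H [] (PLeaf x) eq_refl) as [t2 [-> E]].
    destruct s2; simpl in E; congruence.
  - destruct (H [] (PNode b ch) eq_refl) as [t2 [E1 E]]. simpl in E1. subst t2.
    destruct s2 as [y|b' ch']; simpl in E; [congruence|].
    injection E as <-. f_equal. apply functional_extensionality. intros e.
    apply IH. intros l t1 H1.
    destruct (H _ _ (At_cons_node H1)) as [t2 [[h H2] E2]].
    exists t2. split; auto. replace e with (exist (fun e0 => pp P e0 = b) (proj1_sig e) h); auto.
    apply fib_eq; reflexivity.
Qed.

Lemma is_leaf_At t l : is_leaf t l <-> exists x, At t l (PLeaf x).
Proof.
  revert t; induction l as [|e l IH]; intros t; simpl.
  - destruct t; simpl; split; try tauto; eauto; intros [x H]; discriminate.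
  - destruct t as [x|b ch]; simpl.
    + split; [tauto| intros [x0 []]].
    + split.
      * intros [h H]. apply IH in H. destruct H as [x H]. eauto.
      * intros [x [h H]]. exists h. apply IH. eauto.
Qed.

Lemma At_last_parent t l e t' : At t (l ++ [e]) t' ->
  exists ch, At t l (PNode (pp P e) ch).
Proof.
  intros H. apply At_app in H. destruct H as [t1 [H1 H2]]. simpl in H2.
  destruct t1 as [x|b ch]; [tauto|]. destruct H2 as [h _]. subst. eauto.
Qed.

Lemma At_wc t l t' : wc t -> At t l t' -> wc t'.
Proof.
  revert t; induction l as [|e l IH]; intros t; simpl.
  - intros; subst; auto.
  - destruct t as [x|b ch]; [tauto|]. simpl. intros W [h H].
    apply (IH _ (proj2 (W _)) H).
Qed.

Lemma At_wc_rc t l e t' : wc t -> At t (l ++ [e]) t' -> rc t' = ps P e.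
Proof.
  intros W H. apply At_app in H. destruct H as [t1 [H1 H2]].
  assert (W1 := At_wc W H1). simpl in H2. destruct t1 as [x|b ch]; [tauto|].
  destruct H2 as [h ->]. apply (W1 (exist _ e h)).
Qed.

Definition lastc (r : P0 P) (l : list (P2 P)) : P0 P :=
  match rev l with [] => r | e :: _ => ps P e end.

Lemma lastc_app r l e : lastc r (l ++ [e]) = ps P e.
Proof. unfold lastc. rewrite rev_app_distr. reflexivity. Qed.

Lemma At_wc_rc' t l t' : wc t -> At t l t' -> rc t' = lastc (rc t) l.
Proof.
  intros W H. destruct l as [|e0 l0] using rev_ind.
  - simpl in H. subst. reflexivity.
  - rewrite lastc_app. eapply At_wc_rc; eauto.
Qed.

End Basics.


Section Fmap.
Variables (A B : PolyEnd) (c : Hom A B).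

Lemma hinv_spec b (e' : fibre B (h1 c b)) : h2 c (proj1_sig (hinv c b e')) = proj1_sig e'.
Proof.
  unfold hinv. destruct (constructive_indefinite_description _ _) as [x [[H1 H2] H3]]. simpl. exact H2.
Qed.

Lemma hinv_h2 b e (h : pp A e = b) (h' : pp B (h2 c e) = h1 c b) :
  hinv c b (exist _ (h2 c e) h') = exist _ e h.
Proof.
  apply fib_eq. unfold hinv. destruct (constructive_indefinite_description _ _) as [x [[H1 H2] H3]]. simpl.
  destruct (h_pb c b (h2 c e) h') as [y [_ Hy]].
  simpl in H2. rewrite <- (Hy x (conj H1 H2)). apply Hy. auto.
Qed.

Lemma h2_fib e b (h : pp A e = b) : pp B (h2 c e) = h1 c b.
Proof. rewrite h_p. congruence. Qed.

Lemma fmap_At s l t : At s l t -> At (fmapT c s) (map (h2 c) l) (fmapT c t).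
Proof.
  revert s; induction l as [|e l IH]; intros s; simpl.
  - intros ->; reflexivity.
  - destruct s as [x|b ch]; [tauto|]. intros [h H]. simpl.
    exists (h2_fib h). rewrite (hinv_h2 h). auto.
Qed.

Lemma fmap_At_inv s m t' : At (fmapT c s) m t' ->
  exists l t, m = map (h2 c) l /\ At s l t /\ t' = fmapT c t.
Proof.
  revert s; induction m as [|e' m IH]; intros s; simpl.
  - intros ->. exists [], s. simpl. auto.
  - destruct s as [x|b ch]; simpl; [tauto|]. intros [h H].
    apply IH in H. destruct H as [l [t [-> [H2 ->]]]].
    pose proof (@hinv_spec b (exist _ e' h)) as HS. simpl in HS.
    exists (proj1_sig (hinv c b (exist _ e' h)) :: l), t. split.
    + simpl. f_equal. auto.
    + split; auto. apply At_cons_node. exact H2.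
Qed.

Lemma fmap_rc t : rc (fmapT c t) = h0 c (rc t).
Proof. destruct t; simpl; auto. apply h_t. Qed.

Definition mapsum (y : P0 A + P1 A) : P0 B + P1 B :=
  match y with inl x => inl (h0 c x) | inr b => inr (h1 c b) end.

Lemma fmap_top t : top (fmapT c t) = mapsum (top t).
Proof. destruct t; reflexivity. Qed.

Lemma fmap_inj s l1 l2 t1 t2 : At s l1 t1 -> At s l2 t2 -> map (h2 c) l1 = map (h2 c) l2 -> l1 = l2.
Proof.
  revert s l2; induction l1 as [|e l IH]; intros s l2; destruct l2 as [|e2 l2]; simpl; try discriminate; auto.
  destruct s as [x|b ch]; [tauto|]. intros [h H] [h' H'] E. injection E as E1 E2.
  assert (e = e2).
  { destruct (h_pb c b (h2 c e) (h2_fib h)) as [y [_ Hy]].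
    rewrite <- (Hy e (conj h eq_refl)). apply Hy. split; auto. }
  subst e2. f_equal. assert (h = h') by apply proof_irrelevance. subst. eauto.
Qed.

Lemma fmap_wc s : wc s -> wc (fmapT c s).
Proof.
  induction s as [x|b ch IH]; simpl; auto. intros W e'. split.
  - rewrite fmap_rc. rewrite (proj1 (W _)). rewrite <- h_s. rewrite hinv_spec. reflexivity.
  - apply IH. apply W.
Qed.

End Fmap.

Lemma fmapT_node A B (c : Hom A B) b ch :
  fmapT c (PNode b ch) = PNode (h1 c b) (fun e' => fmapT c (ch (hinv c b e'))).
Proof. reflexivity. Qed.
Lemma fmapT_leaf A B (c : Hom A B) x : fmapT c (PLeaf x) = PLeaf (h0 c x).
Proof. reflexivity. Qed.


Section Subst.
Variable P : PolyEnd.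

Lemma subst_At (s : ptree P) f l t : At s l t -> At (subst s f) l (subst t (fun l' => f (l ++ l'))).
Proof.
  revert s f; induction l as [|e l IH]; intros s f; simpl.
  - intros ->. f_equal.
  - destruct s as [x|b ch]; [tauto|]. intros [h H]. simpl. exists h.
    apply (IH _ (fun l0 => f (e :: l0))). exact H.
Qed.

Lemma subst_At_leaf (s : ptree P) f l1 x l2 t :
  At s l1 (PLeaf x) -> At (f l1) l2 t -> At (subst s f) (l1 ++ l2) t.
Proof.
  intros H1 H2. apply At_app. exists (subst (PLeaf x) (fun l' => f (l1 ++ l'))).
  split; [apply subst_At; auto|]. simpl. rewrite app_nil_r. auto.
Qed.

Lemma subst_At_inv (s : ptree P) f L t : At (subst s f) L t ->
  (exists l1 x l2, L = l1 ++ l2 /\ At s l1 (PLeaf x) /\ At (f l1) l2 t) \/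
  (exists b ch, At s L (PNode b ch) /\ t = subst (PNode b ch) (fun l' => f (L ++ l'))).
Proof.
  revert f L t; induction s as [x|b ch IH]; intros f L t H.
  - left. exists [], x, L. simpl. auto.
  - destruct L as [|e L].
    + simpl in H. subst t. right. exists b, ch. simpl. auto.
    + simpl in H. destruct H as [h H].
      destruct (IH _ _ _ _ H) as [[l1 [x [l2 [-> [H1 H2]]]]] | [b' [ch' [H1 ->]]]].
      * left. exists (e :: l1), x, l2. simpl. split; auto. split; auto. exists h; auto.
      * right. exists b', ch'. split; [exists h; auto| reflexivity].
Qed.

Lemma subst_rc_node (s : ptree P) f b ch : s = PNode b ch -> rc (subst s f) = pt P b.
Proof. intros ->. reflexivity. Qed.

Lemma subst_wc (s : ptree P) f : wc s ->
  (forall l x, At s l (PLeaf x) -> wc (f l) /\ rc (f l) = x) -> wc (subst s f).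
Proof.
  revert f; induction s as [x|b ch IH]; intros f W Hf.
  - simpl. apply (Hf [] x eq_refl).
  - simpl. intros e. split.
    + destruct (ch e) as [y|b' ch'] eqn:E.
      * simpl. destruct (Hf (proj1_sig e :: []) y) as [_ R].
        { rewrite <- E. apply At_cons_node. reflexivity. }
        rewrite R. rewrite <- (proj1 (W e)), E. reflexivity.
      * simpl. rewrite <- (proj1 (W e)), E. reflexivity.
    + apply IH. apply W. intros l x H. apply Hf. apply At_cons_node. auto.
Qed.

End Subst.


Section Ext.
Variables (S T : PolyEnd) (g : Hom S (F T)).

Definition G1 b : ptree T := proj1_sig (h1 g b).
Definition Adr e : list (P2 T) := snd (proj1_sig (h2 g e)).

Lemma G1_wc b : wc (G1 b).
Proof. exact (proj2_sig (h1 g b)). Qed.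

Lemma G1_rc b : rc (G1 b) = h0 g (pt S b).
Proof. exact (h_t g b). Qed.

Lemma h2_fst e : fst (proj1_sig (h2 g e)) = h1 g (pp S e).
Proof. exact (h_p g e). Qed.

Lemma Adr_leaf e : At (G1 (pp S e)) (Adr e) (@PLeaf T (h0 g (ps S e))).
Proof.
  pose proof (proj2_sig (h2 g e)) as L. simpl in L. rewrite h2_fst in L.
  apply is_leaf_At in L. destruct L as [x L].
  pose proof (h_s g e) as E. simpl in E. rewrite h2_fst in E.
  assert (x = h0 g (ps S e)); [|subst; exact L].
  rewrite <- E. pose proof (At_wc_rc' (G1_wc _) L) as R. simpl in R. rewrite R.
  unfold lastc, leafc. reflexivity.
Qed.

Lemma h2_ext e1 e2 : pp S e1 = pp S e2 -> Adr e1 = Adr e2 -> h2 g e1 = h2 g e2.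
Proof.
  intros E1 E2. destruct (h2 g e1) as [[x1 l1] p1] eqn:Q1. destruct (h2 g e2) as [[x2 l2] p2] eqn:Q2.
  unfold Adr in E2. rewrite Q1, Q2 in E2. simpl in E2. subst l2.
  pose proof (h2_fst e1) as F1. pose proof (h2_fst e2) as F2. rewrite Q1 in F1. rewrite Q2 in F2.
  simpl in F1, F2. subst. clear Q1 Q2. revert p1 p2. rewrite E1. intros. f_equal. apply proof_irrelevance.
Qed.

Lemma h2_inj e1 e2 : pp S e1 = pp S e2 -> h2 g e1 = h2 g e2 -> e1 = e2.
Proof.
  intros E1 E2. destruct (h_pb g (pp S e1) (h2 g e1) (h2_fst e1)) as [y [_ Hy]].
  rewrite <- (Hy e1 (conj eq_refl eq_refl)). apply Hy. auto.
Qed.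

Lemma Adr_inj e1 e2 : pp S e1 = pp S e2 -> Adr e1 = Adr e2 -> e1 = e2.
Proof. intros; apply h2_inj; auto; apply h2_ext; auto. Qed.

Lemma Adr_surj b l x : At (G1 b) l (PLeaf x) -> exists e, pp S e = b /\ Adr e = l.
Proof.
  intros H. assert (L : is_leaf (proj1_sig (h1 g b)) l) by (apply is_leaf_At; eauto).
  set (y := exist (fun x => is_leaf (proj1_sig (fst x)) (snd x)) (h1 g b, l) L : P2 (F T)).
  destruct (h_pb g b y eq_refl) as [e [[E1 E2] _]]. exists e. split; auto.
  unfold Adr. rewrite E2. reflexivity.
Qed.

Definition extf b (ch : fibre S b -> ptree S) : list (P2 T) -> ptree T :=
  fun l =>
    match excluded_middle_informative
            (exists e : fibre S b, snd (proj1_sig (h2 g (proj1_sig e))) = l) with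
    | left H => ext g (ch (proj1_sig (constructive_indefinite_description _ H)))
    | right _ => @PLeaf T (h0 g (pt S b))
    end.

Lemma ext_node b ch : ext g (PNode b ch) = subst (G1 b) (extf ch).
Proof. reflexivity. Qed.

Lemma extf_val b ch (e : fibre S b) : extf ch (Adr (proj1_sig e)) = ext g (ch e).
Proof.
  unfold extf. destruct (excluded_middle_informative _) as [H|H].
  - destruct (constructive_indefinite_description _ H) as [e' E]. simpl.
    f_equal. f_equal. apply fib_eq. apply Adr_inj.
    + rewrite (proj2_sig e), (proj2_sig e'). reflexivity.
    + exact E.
  - exfalso. apply H. exists e. reflexivity.
Qed.

Fixpoint Gad (l : list (P2 S)) : list (P2 T) :=
  match l with [] => [] | e :: l => Adr e ++ Gad l end.

Lemma Gad_app l1 l2 : Gad (l1 ++ l2) = Gad l1 ++ Gad l2.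
Proof. induction l1; simpl; auto. rewrite IHl1, app_assoc. auto. Qed.

Lemma ext_At m l t : At m l t -> At (ext g m) (Gad l) (ext g t).
Proof.
  revert m; induction l as [|e l IH]; intros m; simpl.
  - intros ->; reflexivity.
  - destruct m as [x|b ch]; [tauto|]. intros [h H].
    rewrite ext_node. eapply subst_At_leaf.
    + pose proof (Adr_leaf e) as L. rewrite h in L. exact L.
    + pose proof (extf_val ch (exist _ e h)) as V. simpl in V. rewrite V. auto.
Qed.

Lemma ext_At_inv m L t : At (ext g m) L t ->
  exists l t0, At m l t0 /\
   ((exists x, t0 = PLeaf x /\ L = Gad l /\ t = @PLeaf T (h0 g x)) \/
    (exists b ch L2 b' ch', t0 = PNode b ch /\ L = Gad l ++ L2 /\ At (G1 b) L2 (PNode b' ch') /\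
        t = subst (PNode b' ch') (fun l' => extf ch (L2 ++ l')))).
Proof.
  revert L t; induction m as [x|b ch IH]; intros L t H.
  - simpl in H. destruct L; simpl in H; [|tauto]. subst t. exists [], (PLeaf x). simpl.
    split; auto. left. exists x. auto.
  - rewrite ext_node in H. apply subst_At_inv in H.
    destruct H as [[l1 [x [l2 [-> [H1 H2]]]]] | [b' [ch' [H1 ->]]]].
    + destruct (Adr_surj H1) as [e [E1 E2]]. subst l1.
      pose proof (extf_val ch (exist _ e E1)) as V. simpl in V. rewrite V in H2.
      destruct (IH _ _ _ H2) as [l [t0 [A1 R]]].
      exists (e :: l), t0. split; [exists E1; auto|]. simpl.
      destruct R as [[x0 [-> [-> ->]]] | [b0 [ch0 [L2 [b0' [ch0' [-> [-> R]]]]]]]].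
      * left. eauto.
      * right. exists b0, ch0, L2, b0', ch0'. rewrite app_assoc. auto.
    + exists [], (PNode b ch). simpl. split; auto. right.
      exists b, ch, L, b', ch'. auto.
Qed.

Lemma ext_wc m : wc m -> wc (ext g m) /\ rc (ext g m) = h0 g (rc m).
Proof.
  induction m as [x|b ch IH]; intros W.
  - simpl. auto.
  - rewrite ext_node. split.
    + apply subst_wc. apply G1_wc. intros l x H.
      destruct (Adr_surj H) as [e [E1 E2]]. subst l.
      pose proof (extf_val ch (exist _ e E1)) as V. simpl in V. rewrite V.
      destruct (IH (exist _ e E1) (proj2 (W _))) as [W1 R1]. split; auto.
      rewrite R1, (proj1 (W _)). simpl.
      pose proof (Adr_leaf e) as L. rewrite E1 in L. pose proof (At_det H L). congruence.
    + simpl. destruct (G1 b) as [y|b0 ch0] eqn:E.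
      * simpl. assert (H : At (G1 b) [] (PLeaf y)) by (rewrite E; reflexivity).
        destruct (Adr_surj H) as [e [E1 E2]].
        pose proof (extf_val ch (exist _ e E1)) as V. simpl in V. rewrite E2 in V. rewrite V.
        rewrite (proj2 (IH _ (proj2 (W _)))), (proj1 (W _)). simpl.
        pose proof (Adr_leaf e) as L. rewrite E1, E2, E in L. simpl in L. injection L as L.
        pose proof (G1_rc b) as R. rewrite E in R. simpl in R. congruence.
      * simpl. pose proof (G1_rc b) as R. rewrite E in R. simpl in R. auto.
Qed.

End Ext.


Lemma At_node_in P (t : ptree P) l b ch : At t l (PNode b ch) -> node_in b t.
Proof.
  revert t; induction l as [|e l IH]; intros t; simpl.
  - intros E; subst t. simpl. auto.
  - destruct t as [x|b' ch']; [tauto|]. intros [h H]. simpl. right. eauto.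
Qed.

Lemma node_in_At P (t : ptree P) b : node_in b t -> exists l ch, At t l (PNode b ch).
Proof.
  induction t as [x|b' ch' IH]; simpl; [tauto|]. intros [->|[e H]].
  - exists [], ch'. reflexivity.
  - destruct (IH e H) as [l [ch H1]]. exists (proj1_sig e :: l), ch. apply At_cons_node. auto.
Qed.

Section Addr.
Variable S : PolyEnd.
Hypothesis tinj : forall b b', pt S b = pt S b' -> b = b'.
Hypothesis sinj : forall e e', ps S e = ps S e' -> e = e'.

Lemma addr_unique (tau : ptree S) : wc tau -> is_root S (rc tau) ->
  forall l1 l2 t1 t2, At tau l1 t1 -> At tau l2 t2 -> rc t1 = rc t2 -> l1 = l2.
Proof.
  intros W R.
  assert (forall n l1 l2 t1 t2, length l1 <= n -> At tau l1 t1 -> At tau l2 t2 -> rc t1 = rc t2 -> l1 = l2).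
  { induction n as [|n IH]; intros l1 l2 t1 t2 Len H1 H2 E.
    - destruct l1; [|simpl in Len; lia]. simpl in H1. subst t1.
      destruct l2 as [|e l2'] using rev_ind; auto.
      exfalso. apply R. exists e. rewrite E. symmetry. eapply At_wc_rc; eauto.
    - destruct l1 as [|e1 l1'] using rev_ind.
      + simpl in H1. subst t1. destruct l2 as [|e l2'] using rev_ind; auto.
        exfalso. apply R. exists e. rewrite E. symmetry. eapply At_wc_rc; eauto.
      + destruct l2 as [|e2 l2'] using rev_ind.
        * simpl in H2. subst t2. exfalso. apply R. exists e1. rewrite <- E. symmetry. eapply At_wc_rc; eauto.
        * clear IHl1' IHl2'.
          rewrite (At_wc_rc W H1), (At_wc_rc W H2) in E. apply sinj in E. subst e2.
          destruct (At_last_parent H1) as [ch1 P1]. destruct (At_last_parent H2) as [ch2 P2].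
          f_equal. eapply IH; [| exact P1 | exact P2 | reflexivity].
          rewrite length_app in Len. simpl in Len. lia. }
  intros l1 l2 t1 t2. apply (H (length l1)). auto.
Qed.

Definition is_max (tau : ptree S) := wc tau /\ is_root S (rc tau) /\ forall b, node_in b tau.

Lemma max_leaf tau l x b : is_max tau -> At tau l (PLeaf x) -> pt S b <> x.
Proof.
  intros [W [R N]] H E. destruct (node_in_At (N b)) as [l' [ch H']].
  assert (l = l') by (eapply (addr_unique W R H H'); simpl; auto). subst l'.
  pose proof (At_det H H'). discriminate.
Qed.

Lemma max_unique t0 t1 : is_max t0 -> is_max t1 -> rc t0 = rc t1 -> t0 = t1.
Proof.
  intros M0 M1 Er. apply ptree_ext.
  assert (K : forall l u0, At t0 l u0 -> exists u1, At t1 l u1 /\ top u0 = top u1 /\ rc u0 = rc u1).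
  { intros l. induction l as [|e l IH] using rev_ind; intros u0 H.
    - simpl in H. subst u0. exists t1. split; [reflexivity|].
      split; auto. destruct t0 as [x|b ch], t1 as [y|b' ch']; simpl in *; subst; auto.
      + exfalso. eapply (max_leaf (b:=b') (l:=[]) M0); simpl; eauto.
      + exfalso. eapply (max_leaf (b:=b) (l:=[]) M1); simpl; eauto.
      + f_equal. auto.
    - destruct (At_last_parent H) as [ch P0']. destruct (IH _ P0') as [u1 [Hu1 [Tp _]]].
      destruct u1 as [y|b1 ch1]; simpl in Tp; [discriminate|]. injection Tp as <-.
      set (u1 := ch1 (exist _ e eq_refl)).
      assert (Hu : At t1 (l ++ [e]) u1).
      { apply At_app. exists (PNode (pp S e) ch1). split; auto. simpl. exists eq_refl. reflexivity. }
      exists u1. split; auto.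
      assert (Erc : rc u0 = rc u1).
      { rewrite (At_wc_rc (proj1 M0) H), (At_wc_rc (proj1 M1) Hu). auto. }
      split; auto.
      destruct u0 as [x|b ch0], u1 as [y|b' ch0']; simpl in *; subst; auto.
      + exfalso. eapply (max_leaf (b:=b') M0 H). auto.
      + exfalso. eapply (max_leaf (b:=b) M1 Hu). auto.
      + f_equal. auto. }
  intros l u0 H. destruct (K _ _ H) as [u1 [A1 [A2 _]]]. eauto.
Qed.

End Addr.


Section Build.
Variable S : PolyEnd.
Hypothesis tinj : forall b b', pt S b = pt S b' -> b = b'.

Fixpoint stepsN (n : nat) (x y : P0 S) : Prop :=
  match n with 0 => x = y | Datatypes.S n => exists z, @sigma_step S x z /\ stepsN n z y end.

Lemma stepsN_add n m x y z : stepsN n x y -> stepsN m y z -> stepsN (n + m) x z.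
Proof.
  revert x; induction n as [|n IH]; intros x; simpl.
  - intros ->; auto.
  - intros [w [H1 H2]] H3. exists w. split; auto.
Qed.

Lemma rt_stepsN x y : clos_refl_trans _ (@sigma_step S) x y -> exists n, stepsN n x y.
Proof.
  induction 1.
  - exists 1. simpl. eauto.
  - exists 0. reflexivity.
  - destruct IHclos_refl_trans1 as [n H1], IHclos_refl_trans2 as [m H2].
    exists (n + m). eapply stepsN_add; eauto.
Qed.

Fixpoint build (n : nat) (x : P0 S) : ptree S :=
  match n with
  | 0 => PLeaf x
  | Datatypes.S n =>
      match excluded_middle_informative (exists b, pt S b = x) with
      | left H => PNode (proj1_sig (constructive_indefinite_description _ H))
                        (fun e => build n (ps S (proj1_sig e)))
      | right _ => PLeaf x
      end
  end.

Lemma build_wc n x : wc (build n x) /\ rc (build n x) = x.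
Proof.
  revert x; induction n as [|n IH]; intros x; simpl; auto.
  destruct (excluded_middle_informative _) as [H|H]; simpl; auto.
  destruct (constructive_indefinite_description _ H) as [b E]. simpl. split; auto.
  intros e. destruct (IH (ps S (proj1_sig e))). split; auto.
Qed.

Lemma build_node n x b : pt S b = x ->
  build (Datatypes.S n) x = PNode b (fun e => build n (ps S (proj1_sig e))).
Proof.
  intros E. simpl. destruct (excluded_middle_informative _) as [H|H].
  - destruct (constructive_indefinite_description _ H) as [b' E']. simpl.
    assert (b' = b) by (apply tinj; congruence). subst b'. reflexivity.
  - exfalso. eauto.
Qed.

Lemma build_At N r d x : stepsN d x r -> d < N -> exists l, At (build N r) l (build (N - d) x).
Proof.
  revert x; induction d as [|d IH]; intros x H Hd.
  - simpl in H. subst. exists []. replace (N - 0) with N by lia. reflexivity.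
  - destruct H as [z [[e [E1 E2]] H]]. destruct (IH z H ltac:(lia)) as [l Hl].
    destruct (N - d) as [|k] eqn:Ek; [lia|].
    rewrite (build_node k (eq_sym E2)) in Hl.
    exists (l ++ [e]). apply At_app. eexists. split; [exact Hl|].
    simpl. exists eq_refl. subst x. simpl. f_equal. lia.
Qed.

End Build.

Lemma fuel_bound (S : PolyEnd) (r : P0 S) (L : list (P0 S)) :
  (forall x, exists n, stepsN n x r) -> exists N, forall x, In x L -> exists n, stepsN n x r /\ n < N.
Proof.
  intros H. induction L as [|x L IH].
  - exists 0. simpl. tauto.
  - destruct IH as [N HN]. destruct (H x) as [n Hn]. exists (N + n + 1).
    intros y [<-|Hy].
    + exists n. split; auto. lia.
    + destruct (HN y Hy) as [m [Hm1 Hm2]]. exists m. split; auto. lia.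
Qed.

Lemma tree_max (S : PolyEnd) : is_tree S ->
  exists mu : ptree S, is_max_subtree mu /\ forall x, exists l t, At mu l t /\ rc t = x.
Proof.
  intros [[L0 HL0] [_ [_ [tinj [sinj [[r [Rr Ru]] Reach]]]]]].
  assert (Hd : forall x, exists n, stepsN n x r).
  { intros x. apply rt_stepsN. apply Reach. auto. }
  destruct (fuel_bound L0 Hd) as [N HN].
  exists (build N r). destruct (build_wc N r) as [W R].
  split; [split; [auto| split]|].
  - rewrite R. auto.
  - intros b. destruct (HN (pt S b) (HL0 _)) as [d [Hs Hlt]].
    destruct (build_At tinj Hs Hlt) as [l Hl].
    destruct (N - d) as [|k] eqn:E; [lia|].
    rewrite (build_node tinj k (eq_refl (pt S b))) in Hl. eapply At_node_in; eauto.
  - intros x. destruct (HN x (HL0 _)) as [d [Hs Hlt]].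
    destruct (build_At tinj Hs Hlt) as [l Hl]. exists l, (build (N - d) x). split; auto.
    apply build_wc.
Qed.


Lemma sig_eq (X : Type) (Q : X -> Prop) (a b : {x | Q x}) : proj1_sig a = proj1_sig b -> a = b.
Proof. destruct a, b; simpl; intros ->; f_equal; apply proof_irrelevance. Qed.

Section Tt.
Variables (R : PolyEnd) (tau : ptree R).
Hypothesis Wt : wc tau.

Definition TT0 := {l : list (P2 R) | exists t, At tau l t}.
Definition TT1 := {lb : list (P2 R) * P1 R | exists ch, At tau (fst lb) (PNode (snd lb) ch)}.
Definition TT2 := {le : list (P2 R) * P2 R | exists t, At tau (fst le ++ [snd le]) t}.

Definition Tps (e : TT2) : TT0 :=
  exist _ (fst (proj1_sig e) ++ [snd (proj1_sig e)]) (proj2_sig e).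

Lemma Tpp_pf (e : TT2) : exists ch, At tau (fst (fst (proj1_sig e), pp R (snd (proj1_sig e))))
   (PNode (snd (fst (proj1_sig e), pp R (snd (proj1_sig e)))) ch).
Proof. destruct e as [[l e] [t H]]. simpl. exact (At_last_parent H). Qed.

Definition Tpp (e : TT2) : TT1 := exist _ (fst (proj1_sig e), pp R (snd (proj1_sig e))) (Tpp_pf e).

Lemma Tpt_pf (b : TT1) : exists t, At tau (fst (proj1_sig b)) t.
Proof. destruct b as [[l b] [ch H]]. eauto. Qed.

Definition Tpt (b : TT1) : TT0 := exist _ (fst (proj1_sig b)) (Tpt_pf b).

Definition Tt : PolyEnd := mkPoly Tps Tpp Tpt.

Definition col (x : TT0) : P0 R := rc (proj1_sig (constructive_indefinite_description _ (proj2_sig x))).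

Lemma col_spec (x : TT0) t : At tau (proj1_sig x) t -> col x = rc t.
Proof.
  intros H. unfold col. destruct (constructive_indefinite_description _ _) as [t' H']. simpl.
  rewrite (At_det H' H). auto.
Qed.

Lemma pi_s (e : TT2) : ps R (snd (proj1_sig e)) = col (Tps e).
Proof.
  destruct e as [[l e] pf]. pose proof pf as [t H]. simpl.
  erewrite col_spec by (simpl; exact H). symmetry. exact (At_wc_rc Wt H).
Qed.

Lemma pi_t (b : TT1) : pt R (snd (proj1_sig b)) = col (Tpt b).
Proof.
  destruct b as [[l b] pf]. pose proof pf as [ch H]. simpl.
  erewrite col_spec by (simpl; exact H). reflexivity.
Qed.

Lemma pi_pb (b : TT1) (e' : P2 R) : pp R e' = snd (proj1_sig b) ->
  exists! e : TT2, Tpp e = b /\ snd (proj1_sig e) = e'.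
Proof.
  destruct b as [[l b] [ch H]]. simpl. intros E.
  assert (Hv : exists t, At tau (fst (l, e') ++ [snd (l, e')]) t).
  { simpl. exists (ch (exist _ e' E)). apply At_app. exists (PNode b ch). split; auto.
    simpl. exists E. reflexivity. }
  exists (exist _ (l, e') Hv). split.
  - split; auto. apply sig_eq. simpl. rewrite E. reflexivity.
  - intros [[l' e''] Hv'] [E1 E2]. simpl in E2. subst e''. apply sig_eq. simpl.
    apply (f_equal (@proj1_sig _ _)) in E1. simpl in E1. injection E1. intros; subst; auto.
Qed.

Definition piH : Hom Tt R :=
  @mkHom Tt R col (fun b => snd (proj1_sig b)) (fun e => snd (proj1_sig e))
    pi_s (fun e => eq_refl) pi_t pi_pb.

Lemma thin (th : ptree Tt) q t : wc th -> At th q t ->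
  proj1_sig (rc t) = proj1_sig (rc th) ++ map (fun e : TT2 => snd (proj1_sig e)) q.
Proof.
  revert th; induction q as [|e q IH]; intros th W H.
  - simpl in H. subst. simpl. rewrite app_nil_r. auto.
  - destruct th as [x|n ch]; simpl in H; [tauto|]. destruct H as [h H].
    rewrite (IH _ (proj2 (W _)) H). rewrite (proj1 (W _)). simpl.
    rewrite <- h. simpl. rewrite <- app_assoc. reflexivity.
Qed.

Lemma thin_elem (th : ptree Tt) q e q2 t : wc th -> At th (q ++ e :: q2) t ->
  proj1_sig e = (proj1_sig (rc th) ++ map (fun e : TT2 => snd (proj1_sig e)) q, snd (proj1_sig e)).
Proof.
  intros W H. apply At_app in H. destruct H as [t1 [H1 H2]].
  pose proof (thin W H1) as E. destruct t1 as [x|n ch]; simpl in H2; [tauto|]. destruct H2 as [h _].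
  subst n. simpl in E. destruct e as [[l e0] pf]. simpl in *. rewrite <- E. reflexivity.
Qed.

End Tt.


Arguments hinv : simpl never.

Section Lift.
Variables (R : PolyEnd) (tau : ptree R).
Hypothesis Wt : wc tau.

Definition mk0 (base : list (P2 R)) : TT0 tau :=
  match excluded_middle_informative (exists t, At tau base t) with
  | left H => exist _ base H
  | right _ => exist _ [] (ex_intro _ tau eq_refl)
  end.

Lemma mk0_val base t : At tau base t -> proj1_sig (mk0 base) = base.
Proof. intros H. unfold mk0. destruct (excluded_middle_informative _) as [H'|H']; simpl; auto. exfalso; eauto. Qed.

Fixpoint lift (base : list (P2 R)) (s : ptree R) : ptree (Tt tau) :=
  match s with
  | PLeaf _ => @PLeaf (Tt tau) (mk0 base)
  | PNode b ch =>
      match excluded_middle_informative (exists ch0, At tau base (PNode b ch0)) with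
      | left H =>
          @PNode (Tt tau) (exist _ (base, b) H : TT1 tau)
            (fun e' => match excluded_middle_informative
                               (pp R (snd (proj1_sig (proj1_sig e')))= b) with
                       | left h => lift (base ++ [snd (proj1_sig (proj1_sig e'))])
                                        (ch (exist _ _ h))
                       | right _ => @PLeaf (Tt tau) (mk0 base)
                       end)
      | right _ => @PLeaf (Tt tau) (mk0 base)
      end
  end.

Fixpoint liftaddr (base : list (P2 R)) (l : list (P2 R)) : list (TT2 tau) :=
  match l with
  | [] => []
  | e :: l' =>
      match excluded_middle_informative (exists t, At tau (base ++ [e]) t) with
      | left H => (exist _ (base, e) H : TT2 tau) :: liftaddr (base ++ [e]) l'
      | right _ => []
      end
  end.

Definition Emb (base : list (P2 R)) (s : ptree R) : Prop :=
  forall l t, At s l t -> exists t', At tau (base ++ l) t' /\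
     match t with PLeaf x => rc t' = x | PNode b _ => exists ch', t' = PNode b ch' end.

Lemma Emb_child base b ch e h : Emb base (PNode b ch) -> Emb (base ++ [e]) (ch (exist _ e h)).
Proof.
  intros Em l t H. destruct (Em (e :: l) t) as [t' [H1 H2]].
  - simpl. exists h. auto.
  - exists t'. rewrite <- app_assoc. simpl. auto.
Qed.

Lemma Emb_root base s : Emb base s ->
  match s with PLeaf x => exists t', At tau base t' /\ rc t' = x
             | PNode b _ => exists ch', At tau base (PNode b ch') end.
Proof.
  intros Em. destruct (Em [] s eq_refl) as [t' [H1 H2]]. rewrite app_nil_r in H1.
  destruct s; eauto. destruct H2 as [ch' ->]. eauto.
Qed.

Lemma lift_node base b ch (H : exists ch0, At tau base (PNode b ch0)) :
  lift base (PNode b ch) = @PNode (Tt tau) (exist _ (base, b) H : TT1 tau)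
            (fun e' => match excluded_middle_informative
                               (pp R (snd (proj1_sig (proj1_sig e')))= b) with
                       | left h => lift (base ++ [snd (proj1_sig (proj1_sig e'))])
                                        (ch (exist _ _ h))
                       | right _ => @PLeaf (Tt tau) (mk0 base)
                       end).
Proof.
  simpl. destruct (excluded_middle_informative _) as [H'|H']; [|exfalso; auto].
  assert (H = H') by apply proof_irrelevance. subst. reflexivity.
Qed.

Lemma lift_At base s l t : Emb base s -> At s l t ->
  At (lift base s) (liftaddr base l) (lift (base ++ l) t).
Proof.
  revert base s; induction l as [|e l IH]; intros base s Em H.
  - simpl in H. subst. simpl. rewrite app_nil_r. reflexivity.
  - destruct s as [x|b ch]; simpl in H; [tauto|]. destruct H as [h H].
    pose proof (Emb_root Em) as Hr. simpl in Hr.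
    rewrite (lift_node ch Hr). simpl.
    destruct (excluded_middle_informative _) as [Hv|Hv].
    2:{ exfalso. apply Hv. destruct (Em [e] (ch (exist _ e h))) as [t' [H1 _]]; [simpl; exists h; reflexivity|].
        eauto. }
    simpl. unshelve eexists.
    { apply sig_eq. simpl. rewrite h. reflexivity. }
    simpl. destruct (excluded_middle_informative _) as [h'|h']; [|exfalso; auto].
    assert (h' = h) by apply proof_irrelevance. subst h'.
    replace (base ++ e :: l) with ((base ++ [e]) ++ l) by (rewrite <- app_assoc; auto).
    apply IH; auto. apply Emb_child; auto.
Qed.

Lemma lift_At_inv base s q th : Emb base s -> At (lift base s) q th ->
  exists l t, At s l t /\ q = liftaddr base l /\ th = lift (base ++ l) t.
Proof.
  revert base s th; induction q as [|e q IH]; intros base s th Em H.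
  - simpl in H. subst. exists [], s. simpl. rewrite app_nil_r. auto.
  - destruct s as [x|b ch].
    + simpl in H. tauto.
    + pose proof (Emb_root Em) as Hr. simpl in Hr. rewrite (lift_node ch Hr) in H.
      simpl in H. destruct H as [h H].
      destruct (excluded_middle_informative _) as [h'|h'].
      2:{ exfalso. apply h'. apply (f_equal (@proj1_sig _ _)) in h. simpl in h.
          injection h. auto. }
      destruct e as [[l0 e0] pf]. simpl in *.
      apply (f_equal (@proj1_sig _ _)) in h. simpl in h. injection h. intros _ E0. subst l0.
      destruct (IH _ _ _ (Emb_child (h:=h') Em) H) as [l [t [H1 [-> ->]]]].
      exists (e0 :: l), t. split; [exists h'; auto|]. split.
      * simpl. destruct (excluded_middle_informative _) as [Hv|Hv]; [|exfalso; eauto].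
        f_equal. apply sig_eq. reflexivity.
      * rewrite <- app_assoc. reflexivity.
Qed.

Lemma lift_rc base s : Emb base s -> proj1_sig (rc (lift base s)) = base.
Proof.
  intros Em. pose proof (Emb_root Em) as Hr. destruct s as [x|b ch].
  - simpl. destruct Hr as [t' [H _]]. eapply mk0_val; eauto.
  - rewrite (lift_node ch Hr). reflexivity.
Qed.

Lemma lift_wc base s : Emb base s -> wc (lift base s).
Proof.
  revert base; induction s as [x|b ch IH]; intros base Em; [simpl; auto|].
  pose proof (Emb_root Em) as Hr. simpl in Hr. rewrite (lift_node ch Hr). simpl.
  intros [[[l0 e0] pf] E]. simpl. apply (f_equal (@proj1_sig _ _)) in E. simpl in E.
  injection E. intros Eb El. subst l0.
  destruct (excluded_middle_informative _) as [h|h]; [|exfalso; auto].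
  split.
  - apply sig_eq. rewrite lift_rc by (apply Emb_child; auto). reflexivity.
  - apply IH. apply Emb_child; auto.
Qed.

Lemma fmap_lift base s : Emb base s -> fmapT (piH Wt) (lift base s) = s.
Proof.
  revert base; induction s as [x|b ch IH]; intros base Em.
  - simpl. f_equal. pose proof (Emb_root Em) as [t' [H E]]. simpl. subst x.
    apply col_spec. rewrite (mk0_val H). auto.
  - pose proof (Emb_root Em) as Hr. simpl in Hr. rewrite (lift_node ch Hr). rewrite fmapT_node.
    f_equal. apply functional_extensionality. intros e''.
    pose proof (@hinv_spec _ _ (piH Wt) (exist _ (base,b) Hr : TT1 tau) e'') as HS.
    destruct (hinv (piH Wt) (exist _ (base,b) Hr : TT1 tau) e'') as [[[l0 e0] pf] E]. simpl in *.
    destruct (excluded_middle_informative _) as [h|h].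
    2:{ exfalso. apply h. apply (f_equal (@proj1_sig _ _)) in E. simpl in E. injection E; auto. }
    rewrite IH by (apply Emb_child; auto). f_equal. apply fib_eq. simpl. auto.
Qed.

Lemma liftaddr_map base l t : At tau (base ++ l) t ->
  map (fun e : TT2 tau => snd (proj1_sig e)) (liftaddr base l) = l.
Proof.
  revert base; induction l as [|e l IH]; intros base H; simpl; auto.
  destruct (excluded_middle_informative _) as [Hv|Hv].
  - simpl. f_equal. apply IH. rewrite <- app_assoc. auto.
  - exfalso. apply Hv. replace (base ++ e :: l) with ((base ++ [e]) ++ l) in H by (rewrite <- app_assoc; auto).
    apply At_app in H. destruct H as [t1 [H _]]. eauto.
Qed.

End Lift.

Arguments hinv : simpl never.

Lemma fin_sig_list (X : Type) (Q : X -> Prop) (L : list X) :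
  exists L' : list {x | Q x}, forall y, In (proj1_sig y) L -> In y L'.
Proof.
  induction L as [|a L IH].
  - exists []. simpl. tauto.
  - destruct IH as [L' H]. destruct (excluded_middle_informative (Q a)) as [q|q].
    + exists (exist _ a q :: L'). intros y [E|E].
      * left. apply sig_eq. simpl. auto.
      * right. auto.
    + exists L'. intros y [E|E]; auto. exfalso. apply q. rewrite E. apply proj2_sig.
Qed.

Lemma finite_inj (X Y : Type) (f : X -> Y) : (forall x y, f x = f y -> x = y) ->
  finite_type Y -> finite_type X.
Proof.
  intros Inj [LB HB].
  assert (K : forall LB, exists LA, forall x, In (f x) LB -> In x LA).
  { induction LB0 as [|y LB0 IH].
    - exists []. simpl. tauto.
    - destruct IH as [LA H]. destruct (excluded_middle_informative (exists x, f x = y)) as [q|q].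
      + exists (proj1_sig (constructive_indefinite_description _ q) :: LA).
        destruct (constructive_indefinite_description _ q) as [x0 E]. simpl.
        intros x [E'|E']; auto. left. apply Inj. congruence.
      + exists LA. intros x [E'|E']; auto. exfalso. eauto. }
  destruct (K LB) as [LA H]. exists LA. auto.
Qed.

Lemma addr_finite (R : PolyEnd) : finitary R -> forall s : ptree R,
  exists L, forall l t, At s l t -> In l L.
Proof.
  intros FR s. induction s as [x|b ch IH].
  - exists [[]]. intros l t H. destruct l; simpl in H; [left; auto|tauto].
  - destruct (FR b) as [Lf Hf].
    assert (K : forall Lf, exists L, forall e (h : pp R e = b) l t, In e Lf ->
               At (ch (exist _ e h)) l t -> In (e :: l) L).
    { induction Lf0 as [|e0 Lf0 IH2].
      - exists []. simpl. tauto.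
      - destruct IH2 as [L H]. destruct (excluded_middle_informative (pp R e0 = b)) as [h0|h0].
        + destruct (IH (exist _ e0 h0)) as [L0 H0].
          exists (map (cons e0) L0 ++ L). intros e h l t [E|E] Ht; apply in_or_app.
          * left. subst e0. apply in_map. eapply H0.
            assert (h = h0) by apply proof_irrelevance. subst. exact Ht.
          * right. eauto.
        + exists L. intros e h l t [E|E] Ht; [subst; tauto| eauto]. }
    destruct (K Lf) as [L H]. exists ([] :: L). intros l t Ht.
    destruct l as [|e l]; [left; auto|]. right. simpl in Ht. destruct Ht as [h Ht].
    eapply H; eauto.
Qed.

Definition idH (R : PolyEnd) : Hom R R.
Proof.
  refine (@mkHom R R (fun x => x) (fun x => x) (fun x => x) (fun e => eq_refl) (fun e => eq_refl)
     (fun b => eq_refl) _).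
  intros b e' E. exists e'. split; auto. intros e [_ H]. auto.
Defined.

Lemma fmap_id (R : PolyEnd) (s : ptree R) : fmapT (idH R) s = s.
Proof.
  induction s as [x|b ch IH]; [reflexivity|]. rewrite fmapT_node. simpl. f_equal.
  apply functional_extensionality. intros e. rewrite IH. f_equal. apply fib_eq.
  apply (@hinv_spec _ _ (idH R) b e).
Qed.

Arguments hinv : simpl never.

Lemma leafc_At P (t : ptree P) l t' : wc t -> At t l t' -> leafc t l = rc t'.
Proof. intros W H. rewrite (At_wc_rc' W H). reflexivity. Qed.

Section P3.
Variables (S R : PolyEnd) (g : Hom S (F R)) (mu : ptree S).
Hypothesis tinj : forall b b', pt S b = pt S b' -> b = b'.
Hypothesis sinj : forall e e', ps S e = ps S e' -> e = e'.
Hypothesis Mmax : is_max_subtree mu.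
Hypothesis Mcol : forall x, exists l t, At mu l t /\ rc t = x.

Definition addrS (x : P0 S) : list (P2 S) :=
  proj1_sig (constructive_indefinite_description _ (Mcol x)).

Lemma addrS_spec x : exists t, At mu (addrS x) t /\ rc t = x.
Proof. unfold addrS. destruct (constructive_indefinite_description _ _) as [l H]. exact H. Qed.

Lemma addrS_eq l t x : At mu l t -> rc t = x -> addrS x = l.
Proof.
  intros H E. destruct (addrS_spec x) as [t' [H' E']].
  eapply (addr_unique sinj (proj1 Mmax) (proj1 (proj2 Mmax)) H' H). congruence.
Qed.

Lemma nodeS b : exists ch, At mu (addrS (pt S b)) (PNode b ch).
Proof.
  destruct (addrS_spec (pt S b)) as [t [H E]]. destruct t as [x|b' ch].
  - exfalso. simpl in E. eapply (max_leaf sinj (b:=b) Mmax H). auto.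
  - simpl in E. apply tinj in E. subst. eauto.
Qed.

Lemma addrS_child e : addrS (ps S e) = addrS (pt S (pp S e)) ++ [e].
Proof.
  destruct (nodeS (pp S e)) as [ch H]. eapply addrS_eq.
  - apply At_app. exists (PNode (pp S e) ch). split; [exact H|]. simpl. exists eq_refl. reflexivity.
  - pose proof (proj1 Mmax) as W. apply (At_wc W) in H. apply (H (exist _ e eq_refl)).
Qed.

Lemma addrS_root : addrS (rc mu) = [].
Proof. eapply addrS_eq; [reflexivity| auto]. Qed.

Definition tau := ext g mu.
Lemma Wt : wc tau.
Proof. apply (ext_wc g (proj1 Mmax)). Qed.

Definition base b := Gad g (addrS (pt S b)).

Lemma Emb_G1 b : Emb tau (base b) (G1 g b).
Proof.
  destruct (nodeS b) as [ch H]. pose proof (ext_At g H) as HE. rewrite ext_node in HE.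
  intros l t Ht. pose proof (subst_At (extf g ch) Ht) as Hs.
  exists (subst t (fun l' => extf g ch (l ++ l'))). split.
  - unfold tau, base. apply At_app. eauto.
  - destruct t as [x|b' ch'].
    + simpl. rewrite app_nil_r. destruct (Adr_surj Ht) as [e [E1 E2]]. subst l.
      pose proof (extf_val g ch (exist _ e E1)) as V. simpl in V. rewrite V.
      assert (W1 : wc (ch (exist _ e E1))).
      { pose proof (At_wc (proj1 Mmax) H) as W. apply (W (exist _ e E1)). }
      rewrite (proj2 (ext_wc g W1)).
      pose proof (At_wc (proj1 Mmax) H) as W. rewrite (proj1 (W (exist _ e E1))). simpl.
      pose proof (Adr_leaf g e) as L. rewrite E1 in L. pose proof (At_det Ht L). congruence.
    + simpl. eauto.
Qed.

Lemma a0_pf x : exists t, At tau (Gad g (addrS x)) t.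
Proof. destruct (addrS_spec x) as [t [H _]]. exists (ext g t). apply ext_At. auto. Qed.

Definition a0 (x : P0 S) : TT0 tau := exist _ (Gad g (addrS x)) (a0_pf x).

Definition a1 (b : P1 S) : FP1 (Tt tau) := exist _ (lift tau (base b) (G1 g b)) (lift_wc (Emb_G1 (b:=b))).

Lemma a2_pf e : is_leaf (proj1_sig (fst (a1 (pp S e), liftaddr tau (base (pp S e)) (Adr g e))))
                        (snd (a1 (pp S e), liftaddr tau (base (pp S e)) (Adr g e))).
Proof.
  simpl. apply is_leaf_At. pose proof (lift_At (Emb_G1 (b:=pp S e)) (Adr_leaf g e)) as H.
  simpl in H. eauto.
Qed.

Definition a2 (e : P2 S) : P2 (F (Tt tau)) :=
  exist (fun x : FP1 (Tt tau) * list (TT2 tau) => is_leaf (proj1_sig (fst x)) (snd x)) (a1 (pp S e), liftaddr tau (base (pp S e)) (Adr g e)) (a2_pf e).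

Lemma base_child e : base (pp S e) ++ Adr g e = Gad g (addrS (ps S e)).
Proof. unfold base. rewrite addrS_child, Gad_app. simpl. rewrite app_nil_r. reflexivity. Qed.

Lemma a_s e : ps (F (Tt tau)) (a2 e) = a0 (ps S e).
Proof.
  simpl. rewrite (leafc_At (lift_wc (Emb_G1 (b:=pp S e))) (lift_At (Emb_G1 (b:=pp S e)) (Adr_leaf g e))).
  simpl. apply sig_eq. simpl. rewrite <- base_child.
  destruct (a0_pf (ps S e)) as [t Ht]. rewrite <- base_child in Ht. exact (mk0_val Ht).
Qed.

Lemma a_t b : pt (F (Tt tau)) (a1 b) = a0 (pt S b).
Proof. apply sig_eq. simpl. rewrite lift_rc by apply Emb_G1. reflexivity. Qed.

Lemma Emb_sub base s l t : Emb tau base s -> At s l t -> Emb tau (base ++ l) t.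
Proof.
  intros Em H l' t' H'. destruct (Em (l ++ l') t') as [t'' [A1 A2]].
  - apply At_app. eauto.
  - exists t''. rewrite <- app_assoc. auto.
Qed.

Lemma Emb_addr base s l t : Emb tau base s -> At s l t -> exists t', At tau (base ++ l) t'.
Proof. intros Em H. destruct (Em l t H) as [t' [A _]]. eauto. Qed.

Lemma a_pb b (e' : P2 (F (Tt tau))) : pp (F (Tt tau)) e' = a1 b ->
  exists! e, pp S e = b /\ a2 e = e'.
Proof.
  destruct e' as [[x q] L]. simpl. intros ->. simpl in L.
  pose proof L as L0. rewrite is_leaf_At in L0. destruct L0 as [y L0].
  destruct (lift_At_inv (Emb_G1 (b:=b)) L0) as [l [t [Ht [-> Et]]]].
  destruct t as [z|b' ch'].
  2:{ exfalso. pose proof (Emb_root (Emb_sub (Emb_G1 (b:=b)) Ht)) as Hr. simpl in Hr.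
      rewrite (lift_node ch' Hr) in Et. discriminate. }
  destruct (Adr_surj Ht) as [e [E1 E2]]. exists e. split.
  - split; auto. apply sig_eq. simpl. subst b l. reflexivity.
  - intros e2 [F1 F2]. apply (f_equal (@proj1_sig _ _)) in F2. simpl in F2.
    injection F2 as _ F3. subst b. apply (Adr_inj (g:=g)); auto.
    destruct (Emb_addr (Emb_G1 (b:=pp S e2)) (Adr_leaf g e2)) as [t2 T2].
    destruct (Emb_addr (Emb_G1 (b:=pp S e)) Ht) as [t1 T1].
    rewrite E2. rewrite <- (liftaddr_map T2). rewrite <- (liftaddr_map T1). rewrite F3. reflexivity.
Qed.

Definition aH : Hom S (F (Tt tau)) := @mkHom S (F (Tt tau)) a0 a1 a2 a_s (fun e => eq_refl) a_t a_pb.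


Lemma aH_Fcomp : Fcomp_eq (piH Wt) aH (idH R) g.
Proof.
  split; [|split].
  - intros x. simpl. destruct (addrS_spec x) as [t [H E]].
    rewrite (col_spec (x:=a0 x) (ext_At g H)).
    rewrite (proj2 (ext_wc g (At_wc (proj1 Mmax) H))). congruence.
  - intros b. unfold Fm1. simpl. rewrite fmap_lift by apply Emb_G1. rewrite fmap_id. reflexivity.
  - intros e. unfold Fm2. simpl. rewrite fmap_lift by apply Emb_G1. rewrite fmap_id.
    rewrite map_id. rewrite (h2_fst g e). f_equal.
    destruct (Emb_addr (Emb_G1 (b:=pp S e)) (Adr_leaf g e)) as [t T1].
    exact (liftaddr_map T1).
Qed.

Lemma Tt_finitary : finitary R -> finitary (Tt tau).
Proof.
  intros FR [[l b] pf]. destruct (FR b) as [Lf Hf].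
  destruct (fin_sig_list (fun le : list (P2 R) * P2 R => exists t, At tau (fst le ++ [snd le]) t)
             (map (fun e => (l, e)) Lf)) as [L HL].
  exists L. intros [[l' e] pf'] E. apply HL. simpl.
  apply (f_equal (@proj1_sig _ _)) in E. simpl in E. injection E as -> Eb.
  apply in_map. auto.
Qed.


Lemma cover L b ch : At tau L (PNode b ch) ->
  exists bS Lrel ch', L = base bS ++ Lrel /\ At (G1 g bS) Lrel (PNode b ch').
Proof.
  intros H. destruct (ext_At_inv H) as [l [t0 [H0 [[x [_ [_ E]]] | [b0 [ch0 [L2 [b' [ch' [-> [-> [H2 E]]]]]]]]]]]].
  - discriminate.
  - simpl in E. injection E. intros _ ->. exists b0, L2, ch'. split; auto.
    unfold base. f_equal. f_equal. symmetry. eapply addrS_eq; eauto.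
Qed.

Variable u : Hom R (Tt tau).
Hypothesis Hc : comp_eq (piH Wt) u (idH R).
Hypothesis Hf : Fcomp_eq1 u g aH.

Lemma u0_inj x y : h0 u x = h0 u y -> x = y.
Proof. intros E. pose proof (proj1 Hc x) as A. pose proof (proj1 Hc y) as B. simpl in A, B. rewrite E in A. congruence. Qed.
Lemma u1_inj x y : h1 u x = h1 u y -> x = y.
Proof. intros E. pose proof (proj1 (proj2 Hc) x) as A. pose proof (proj1 (proj2 Hc) y) as B. simpl in A, B. rewrite E in A. congruence. Qed.
Lemma u2_inj x y : h2 u x = h2 u y -> x = y.
Proof. intros E. pose proof (proj2 (proj2 Hc) x) as A. pose proof (proj2 (proj2 Hc) y) as B. simpl in A, B. rewrite E in A. congruence. Qed.

Lemma u1_surj (n : TT1 tau) : exists b, h1 u b = n.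
Proof.
  destruct n as [[L b] pf]. pose proof pf as [ch H]. simpl in H.
  destruct (cover H) as [bS [Lrel [ch' [EL Hrel]]]].
  pose proof (lift_At (Emb_G1 (b:=bS)) Hrel) as HL.
  pose proof (Emb_root (Emb_sub (Emb_G1 (b:=bS)) Hrel)) as Hr. simpl in Hr.
  rewrite (lift_node ch' Hr) in HL.
  pose proof (proj1 (proj2 Hf) bS) as E1. unfold Fm1, raw1 in E1. simpl in E1.
  change (proj1_sig (h1 g bS)) with (G1 g bS) in E1. rewrite <- E1 in HL.
  destruct (fmap_At_inv HL) as [l [t [_ [_ Et]]]].
  apply (f_equal (@top _)) in Et. destruct t as [z|b0 ch0]; simpl in Et; [discriminate|].
  injection Et as Et. exists b0. rewrite <- Et. apply sig_eq. simpl. rewrite EL. reflexivity.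
Qed.

Lemma u2_surj (e' : TT2 tau) : exists e, h2 u e = e'.
Proof.
  destruct (u1_surj (Tpp e')) as [b Eb].
  destruct (h_pb u b e' (eq_sym Eb)) as [e [[_ E] _]]. eauto.
Qed.


Hypothesis FR : finitary R.

Lemma TT0_fin : finite_type (TT0 tau).
Proof.
  destruct (addr_finite FR tau) as [L HL].
  destruct (fin_sig_list (fun l => exists t, At tau l t) L) as [L' H'].
  exists L'. intros [l pf]. apply H'. simpl. destruct pf as [t Ht]. eapply HL; eauto.
Qed.

Lemma Tpt_inj (n1 n2 : TT1 tau) : Tpt n1 = Tpt n2 -> n1 = n2.
Proof.
  destruct n1 as [[l1 b1] [c1 H1]], n2 as [[l2 b2] [c2 H2]]. intros E.
  apply (f_equal (@proj1_sig _ _)) in E. simpl in E. subst l2. simpl in *.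
  pose proof (At_det H1 H2) as E. apply (f_equal (@top _)) in E. simpl in E. injection E as ->.
  apply sig_eq. reflexivity.
Qed.

Lemma Tps_inj (e1 e2 : TT2 tau) : Tps e1 = Tps e2 -> e1 = e2.
Proof.
  destruct e1 as [[l1 x1] p1], e2 as [[l2 x2] p2]. intros E.
  apply (f_equal (@proj1_sig _ _)) in E. simpl in E. apply app_inj_tail in E. destruct E; subst.
  apply sig_eq. reflexivity.
Qed.

Lemma root_val : proj1_sig (h0 u (h0 g (rc mu))) = [].
Proof. rewrite (proj1 Hf). simpl. rewrite addrS_root. reflexivity. Qed.

Lemma r_root : is_root R (h0 g (rc mu)).
Proof.
  intros [e E]. pose proof (h_s u e) as Hs. rewrite E in Hs.
  apply (f_equal (@proj1_sig _ _)) in Hs. rewrite root_val in Hs. simpl in Hs.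
  destruct (fst (proj1_sig (h2 u e))); discriminate.
Qed.

Lemma nonroot_step x l e0 : proj1_sig (h0 u x) = l ++ [e0] ->
  exists e, ps R e = x /\ proj1_sig (h0 u (pt R (pp R e))) = l.
Proof.
  intros E. pose proof (proj2_sig (h0 u x)) as pf. simpl in pf. rewrite E in pf.
  destruct (u2_surj (exist (fun le : list (P2 R) * P2 R => exists t, At tau (fst le ++ [snd le]) t) (l, e0) pf))
    as [e Ee].
  exists e. split.
  - apply u0_inj. rewrite <- h_s. rewrite Ee. apply sig_eq. simpl. auto.
  - rewrite <- h_t. rewrite <- h_p. rewrite Ee. reflexivity.
Qed.

Lemma R_tree : is_tree R.
Proof.
  split; [|split; [|split; [|split; [|split; [|split]]]]].
  - apply (finite_inj u0_inj TT0_fin).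
  - apply (finite_inj u1_inj). apply (finite_inj Tpt_inj TT0_fin).
  - apply (finite_inj u2_inj). apply (finite_inj Tps_inj TT0_fin).
  - intros b b' E. apply u1_inj. apply Tpt_inj. change (pt (Tt tau) (h1 u b) = pt (Tt tau) (h1 u b')).
    rewrite !h_t, E. reflexivity.
  - intros e e' E. apply u2_inj. apply Tps_inj. change (ps (Tt tau) (h2 u e) = ps (Tt tau) (h2 u e')).
    rewrite !h_s, E. reflexivity.
  - exists (h0 g (rc mu)). split; [apply r_root|]. intros x Rx.
    destruct (proj1_sig (h0 u x)) as [|e0 l] eqn:E using rev_ind.
    + apply u0_inj. apply sig_eq. rewrite E, root_val. reflexivity.
    + destruct (nonroot_step E) as [e [Ee _]]. exfalso. apply Rx. eauto.
  - assert (K : forall n x, length (proj1_sig (h0 u x)) <= n ->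
              clos_refl_trans _ (@sigma_step R) x (h0 g (rc mu))).
    { induction n as [|n IH]; intros x Len.
      - destruct (proj1_sig (h0 u x)) eqn:E; [|simpl in Len; lia].
        assert (x = h0 g (rc mu)) as ->; [|apply rt_refl].
        apply u0_inj. apply sig_eq. rewrite E, root_val. reflexivity.
      - destruct (proj1_sig (h0 u x)) as [|e0 l] eqn:E using rev_ind.
        + assert (x = h0 g (rc mu)) as ->; [|apply rt_refl].
          apply u0_inj. apply sig_eq. rewrite E, root_val. reflexivity.
        + destruct (nonroot_step E) as [e [Ee El]]. eapply rt_trans.
          * apply rt_step. exists e. split; eauto.
          * apply IH. rewrite El. rewrite length_app in Len. simpl in Len. lia. }
    intros x r Rr. assert (r = h0 g (rc mu)).
    { destruct (proj1_sig (h0 u r)) as [|e0 l] eqn:E using rev_ind.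
      + apply u0_inj. apply sig_eq. rewrite E, root_val. reflexivity.
      + destruct (nonroot_step E) as [e [Ee _]]. exfalso. apply Rr. eauto. }
    subst. eapply K. eauto.
Qed.

Lemma tau_max : is_max_subtree tau.
Proof.
  split; [apply Wt|split].
  - unfold tau. rewrite (proj2 (ext_wc g (proj1 Mmax))). apply r_root.
  - intros b. pose proof (proj2_sig (h1 u b)) as [ch H]. simpl in H.
    pose proof (proj1 (proj2 Hc) b) as E. simpl in E. apply At_node_in in H. rewrite E in H. exact H.
Qed.

End P3.


Theorem part3 : forall (S R : PolyEnd), is_tree S -> finitary R ->
     forall g : Hom S (F R), generic g -> is_tree R /\ boundary_preserving g.
Proof.
  intros S R TS FR g Gen.
  destruct (tree_max TS) as [mu [Mmax Mcol]].
  pose proof TS as [_ [_ [_ [tinj [sinj [[r [Rr Ru]] _]]]]]].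
  pose (Wt0 := Wt g Mmax).
  destruct (Gen (Tt (tau g mu)) R (Tt_finitary (g:=g) (mu:=mu) FR) FR (aH g tinj sinj Mmax Mcol) (piH Wt0) (idH R)
              (aH_Fcomp g tinj sinj Mmax Mcol)) as [u [Hc [Hf _]]].
  split.
  - exact (R_tree Hc Hf FR).
  - intros t0 M0. assert (t0 = mu) as ->.
    { apply (max_unique tinj sinj M0 Mmax). rewrite (Ru _ (proj1 (proj2 M0))), (Ru _ (proj1 (proj2 Mmax))). auto. }
    exact (tau_max Hc Hf).
Qed.

Arguments hinv : simpl never.

Section Nat.
Variables (S C C' D : PolyEnd) (a : Hom S (F C)) (a' : Hom S (F C')) (c : Hom C D) (b : Hom C' D).
Hypothesis FE : Fcomp_eq c a b a'.

Lemma FE_adr e : map (h2 c) (Adr a e) = map (h2 b) (Adr a' e).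
Proof. pose proof (proj2 (proj2 FE) e) as E. unfold Fm2 in E. injection E. auto. Qed.

Lemma FE_gad l : map (h2 c) (Gad a l) = map (h2 b) (Gad a' l).
Proof. induction l; simpl; auto. rewrite !map_app, FE_adr, IHl. auto. Qed.

Lemma FE_G1 bS : fmapT c (G1 a bS) = fmapT b (G1 a' bS).
Proof. exact (proj1 (proj2 FE) bS). Qed.

Lemma nat_ext m : fmapT c (ext a m) = fmapT b (ext a' m).
Proof.
  apply ptree_ext. intros L t H.
  destruct (fmap_At_inv H) as [l [t0 [-> [H0 ->]]]].
  destruct (ext_At_inv H0) as [lS [s0 [HS [[x [-> [-> ->]]] | [bS [ch [L2 [beta [chb [-> [-> [H2 ->]]]]]]]]]]]].
  - exists (fmapT b (ext a' (PLeaf x))). split.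
    + rewrite FE_gad. apply fmap_At. apply ext_At. auto.
    + simpl. f_equal. apply (proj1 FE).
  - pose proof (fmap_At c H2) as H3. rewrite FE_G1 in H3.
    destruct (fmap_At_inv H3) as [L2' [t2 [E2 [H4 E4]]]].
    apply (f_equal (@top _)) in E4. destruct t2 as [z|beta' ch2]; simpl in E4; [discriminate|].
    pose proof (ext_At a' HS) as H5. rewrite ext_node in H5.
    pose proof (subst_At (extf a' ch) H4) as H6.
    exists (fmapT b (subst (PNode beta' ch2) (fun l' => extf a' ch (L2' ++ l')))). split.
    + rewrite map_app, FE_gad, E2, <- map_app. apply fmap_At. apply At_app. eauto.
    + simpl. auto.
Qed.

End Nat.

Arguments hinv : simpl never.

Section Gen.
Variables (S T : PolyEnd) (g : Hom S (F T)) (mu : ptree S).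
Hypothesis tinj : forall b b', pt S b = pt S b' -> b = b'.
Hypothesis sinj : forall e e', ps S e = ps S e' -> e = e'.
Hypothesis Mmax : is_max_subtree mu.
Hypothesis Mcol : forall x, exists l t, At mu l t /\ rc t = x.

Local Notation tau := (tau g mu).
Local Notation TT := (Tt tau).
Local Notation AH := (aH g tinj sinj Mmax Mcol).
Local Notation PI := (piH (Wt g Mmax)).

Variables (C D : PolyEnd) (a : Hom S (F C)) (c : Hom C D) (b : Hom TT D).
Hypothesis FE : Fcomp_eq c a b AH.

Local Notation Th := (ext AH mu).
Local Notation sC := (ext a mu).

Lemma F1 : fmapT PI Th = tau.
Proof. rewrite (nat_ext (aH_Fcomp g tinj sinj Mmax Mcol)). apply fmap_id. Qed.

Lemma F2 : fmapT c sC = fmapT b Th.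
Proof. apply (nat_ext FE). Qed.

Lemma WTh : wc Th.
Proof. apply (ext_wc AH (proj1 Mmax)). Qed.

Lemma WsC : wc sC.
Proof. apply (ext_wc a (proj1 Mmax)). Qed.

Lemma rcTh : proj1_sig (rc Th) = [].
Proof. rewrite (proj2 (ext_wc AH (proj1 Mmax))). simpl. rewrite addrS_root; auto. Qed.

Definition pi2 (e : P2 TT) : P2 T := snd (proj1_sig e).

Definition Corr (l : list (P2 T)) (m : list (P2 C)) : Prop :=
  exists q tq tm, At Th q tq /\ map pi2 q = l /\ At sC m tm /\ map (h2 c) m = map (h2 b) q.

Lemma Corr_ex l t : At tau l t -> exists m, Corr l m.
Proof.
  intros H. rewrite <- F1 in H. destruct (fmap_At_inv H) as [q [tq [-> [Hq _]]]].
  pose proof (fmap_At b Hq) as H2. rewrite <- F2 in H2.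
  destruct (fmap_At_inv H2) as [m [tm [Em [Hm _]]]]. exists m, q, tq, tm. auto.
Qed.

Lemma q_unique q1 q2 t1 t2 : At Th q1 t1 -> At Th q2 t2 -> map pi2 q1 = map pi2 q2 -> q1 = q2.
Proof. intros H1 H2 E. exact (fmap_inj (c:=PI) H1 H2 E). Qed.

Lemma Corr_fun l m1 m2 : Corr l m1 -> Corr l m2 -> m1 = m2.
Proof.
  intros [q1 [t1 [s1 [A1 [B1 [C1 D1]]]]]] [q2 [t2 [s2 [A2 [B2 [C2 D2]]]]]].
  assert (q1 = q2) by (eapply q_unique; eauto; congruence). subst q2.
  eapply (fmap_inj (c:=c) C1 C2). congruence.
Qed.

Lemma Corr_inj l1 l2 m : Corr l1 m -> Corr l2 m -> l1 = l2.
Proof.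
  intros [q1 [t1 [s1 [A1 [B1 [C1 D1]]]]]] [q2 [t2 [s2 [A2 [B2 [C2 D2]]]]]].
  assert (q1 = q2) by (eapply (fmap_inj (c:=b) A1 A2); congruence). subst. auto.
Qed.

Lemma Corr_app l1 l2 m : Corr (l1 ++ l2) m ->
  exists m1 m2, m = m1 ++ m2 /\ Corr l1 m1 /\ length m1 = length l1.
Proof.
  intros [q [tq [tm [A1 [B1 [C1 D1]]]]]].
  destruct (map_eq_app _ _ _ _ B1) as [q1 [q2 [-> [E1 E2]]]].
  rewrite map_app in D1. destruct (map_eq_app _ _ _ _ D1) as [m1 [m2 [-> [G1 G2]]]].
  exists m1, m2. split; auto. split.
  - apply At_app in A1. destruct A1 as [t1 [A1 _]]. apply At_app in C1. destruct C1 as [s1 [C1 _]].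
    exists q1, t1, s1. auto.
  - rewrite <- E1, <- (length_map (h2 c) m1), G1, !length_map. auto.
Qed.

Lemma Corr_len l m : Corr l m -> length m = length l.
Proof.
  intros [q [tq [tm [A1 [B1 [C1 D1]]]]]]. rewrite <- B1, <- (length_map (h2 c) m), D1, !length_map. auto.
Qed.

Lemma Th_tau q tq t : At Th q tq -> At tau (map pi2 q) t -> fmapT PI tq = t.
Proof. intros H1 H2. pose proof (fmap_At PI H1) as H3. rewrite F1 in H3. exact (At_det H3 H2). Qed.

Lemma Th_rc q tq : At Th q tq -> proj1_sig (rc tq) = map pi2 q.
Proof. intros H. rewrite (thin WTh H), rcTh. reflexivity. Qed.

Lemma Corr_top l m q tq tm : Corr l m -> At Th q tq -> map pi2 q = l -> At sC m tm ->
  fmapT c tm = fmapT b tq.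
Proof.
  intros [q' [tq' [tm' [A1 [B1 [C1 D1]]]]]] Hq Eq Hm.
  assert (q' = q) by (eapply q_unique; eauto; congruence). subst q'.
  pose proof (fmap_At c Hm) as H1. pose proof (fmap_At b Hq) as H2. rewrite <- F2 in H2.
  rewrite D1 in H1. exact (At_det H1 H2).
Qed.


Lemma app_len_inv (X : Type) (l1 l2 l3 l4 : list X) :
  l1 ++ l2 = l3 ++ l4 -> length l1 = length l3 -> l1 = l3 /\ l2 = l4.
Proof.
  revert l3; induction l1 as [|x l1 IH]; intros [|y l3]; simpl; try discriminate; auto.
  intros E L. injection E as -> E. injection L as L. destruct (IH _ E L). subst. auto.
Qed.

Lemma Corr_snoc l e0 m x : Corr (l ++ [e0]) (m ++ [x]) -> Corr l m.
Proof.
  intros H. pose proof (Corr_len H) as Len. rewrite !length_app in Len. simpl in Len.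
  destruct (Corr_app H) as [m1 [m2 [E [H1 L1]]]].
  destruct (app_len_inv E) as [-> _]; [lia|]. auto.
Qed.

Lemma u0_ex (x : TT0 tau) : exists y, exists m tm, Corr (proj1_sig x) m /\ At sC m tm /\ rc tm = y.
Proof.
  destruct x as [l [t H]]. simpl. destruct (Corr_ex H) as [m Hm].
  pose proof Hm as [q [tq [tm [_ [_ [A _]]]]]]. eauto 6.
Qed.

Lemma u1_ex (n : TT1 tau) : exists y, exists m ch, Corr (fst (proj1_sig n)) m /\ At sC m (PNode y ch).
Proof.
  destruct n as [[L beta] [ch H]]. simpl. destruct (Corr_ex H) as [m Hm].
  pose proof Hm as [q [tq [tm [A1 [B1 [C1 D1]]]]]].
  pose proof (Corr_top Hm A1 B1 C1) as E. rewrite <- B1 in H. pose proof (Th_tau A1 H) as E2.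
  apply (f_equal (@top _)) in E2. destruct tq as [z|n0 chq]; simpl in E2; [discriminate|].
  apply (f_equal (@top _)) in E. destruct tm as [z|y chm]; simpl in E; [discriminate|].
  exists y, m, chm. auto.
Qed.

Lemma u2_ex (e : TT2 tau) : exists x, exists m, Corr (fst (proj1_sig e) ++ [snd (proj1_sig e)]) (m ++ [x]).
Proof.
  destruct e as [[l e0] [t H]]. simpl in *. destruct (Corr_ex H) as [m' Hm].
  pose proof (Corr_len Hm) as Len. rewrite length_app in Len. simpl in Len.
  destruct m' as [|x m] using rev_ind; [simpl in Len; lia|]. eauto.
Qed.

Definition U0 (x : TT0 tau) : P0 C := proj1_sig (constructive_indefinite_description _ (u0_ex x)).
Definition U1 (n : TT1 tau) : P1 C := proj1_sig (constructive_indefinite_description _ (u1_ex n)).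
Definition U2 (e : TT2 tau) : P2 C := proj1_sig (constructive_indefinite_description _ (u2_ex e)).

Lemma U0_spec x m tm : Corr (proj1_sig x) m -> At sC m tm -> U0 x = rc tm.
Proof.
  intros H1 H2. unfold U0. destruct (constructive_indefinite_description _ _) as [y [m' [tm' [A [B E]]]]].
  simpl. rewrite <- E. rewrite (Corr_fun A H1) in B. rewrite (At_det B H2). auto.
Qed.

Lemma U1_spec n m y ch : Corr (fst (proj1_sig n)) m -> At sC m (PNode y ch) -> U1 n = y.
Proof.
  intros H1 H2. unfold U1. destruct (constructive_indefinite_description _ _) as [y' [m' [ch' [A B]]]].
  simpl. rewrite (Corr_fun A H1) in B. pose proof (At_det B H2) as E.
  apply (f_equal (@top _)) in E. simpl in E. congruence.
Qed.

Lemma U2_spec e m x : Corr (fst (proj1_sig e) ++ [snd (proj1_sig e)]) (m ++ [x]) -> U2 e = x.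
Proof.
  intros H1. unfold U2. destruct (constructive_indefinite_description _ _) as [x' [m' A]].
  simpl. pose proof (Corr_fun A H1) as E. apply app_inj_tail in E. destruct E; auto.
Qed.

Lemma U2_corr e : exists m, Corr (fst (proj1_sig e) ++ [snd (proj1_sig e)]) (m ++ [U2 e]).
Proof.
  unfold U2. destruct (constructive_indefinite_description _ _) as [x' [m' A]]. simpl. eauto.
Qed.

Lemma U_s e : ps C (U2 e) = U0 (Tps e).
Proof.
  destruct (U2_corr e) as [m H]. pose proof H as [q [tq [tm [_ [_ [A _]]]]]].
  rewrite (U0_spec (x:=Tps e) H A). symmetry. exact (At_wc_rc WsC A).
Qed.

Lemma U_p e : pp C (U2 e) = U1 (Tpp e).
Proof.
  destruct (U2_corr e) as [m H]. pose proof H as [q [tq [tm [_ [_ [A _]]]]]].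
  destruct (At_last_parent A) as [ch P]. symmetry. apply (U1_spec (n:=Tpp e) (Corr_snoc H) P).
Qed.

Lemma U_t n : pt C (U1 n) = U0 (Tpt n).
Proof.
  unfold U1. destruct (constructive_indefinite_description _ _) as [y [m [ch [A B]]]]. simpl.
  rewrite (U0_spec (x:=Tpt n) A B). reflexivity.
Qed.


Lemma U_pb (n : TT1 tau) (x' : P2 C) : pp C x' = U1 n ->
  exists! e : TT2 tau, Tpp e = n /\ U2 e = x'.
Proof.
  intros Ex.
  unfold U1 in Ex. destruct (constructive_indefinite_description _ _) as [y [m [ch [Hm Am]]]].
  simpl in Ex. subst y.
  assert (Ac : At sC (m ++ [x']) (ch (exist _ x' eq_refl))).
  { apply At_app. exists (PNode (pp C x') ch). split; auto. simpl. exists eq_refl. reflexivity. }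
  pose proof (fmap_At c Ac) as H1. rewrite F2 in H1.
  destruct (fmap_At_inv H1) as [q' [tq' [Eq' [Aq' _]]]].
  assert (Lq : length q' = length m + 1).
  { apply (f_equal (@length _)) in Eq'. rewrite !length_map, length_app in Eq'. simpl in Eq'. symmetry. exact Eq'. }
  destruct q' as [|y0 q0] using rev_ind; [simpl in Lq; lia|]. clear IHq0.
  pose proof (fmap_At PI Aq') as Hl. rewrite F1 in Hl.
  assert (Hc' : Corr (map pi2 (q0 ++ [y0])) (m ++ [x'])).
  { exists (q0 ++ [y0]), tq', (ch (exist _ x' eq_refl)). repeat split; auto. }
  rewrite map_app in Hc'. cbn [map] in Hc'.
  pose proof (Corr_snoc Hc') as Hc0.
  assert (EL : map pi2 q0 = fst (proj1_sig n)) by (eapply Corr_inj; eauto).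
  change (map (h2 PI) (q0 ++ [y0])) with (map pi2 (q0 ++ [y0])) in Hl.
  rewrite map_app in Hl. cbn [map] in Hl. rewrite EL in Hc', Hl.
  set (y := pi2 y0) in *.
  assert (pf : exists t, At tau (fst (fst (proj1_sig n), y) ++ [snd (fst (proj1_sig n), y)]) t) by (simpl; eauto).
  exists (exist _ (fst (proj1_sig n), y) pf). split.
  - split.
    + apply sig_eq. simpl. destruct n as [[L beta] [chn Hn]]. simpl in *. f_equal.
      destruct (At_last_parent Hl) as [ch2 P2]. pose proof (At_det P2 Hn) as E.
      apply (f_equal (@top _)) in E. simpl in E. congruence.
    + apply (U2_spec (m:=m)). simpl. exact Hc'.
  - intros [[L1 y1] pf1] [E1 E2]. apply sig_eq. simpl.
    apply (f_equal (@proj1_sig _ _)) in E1. simpl in E1.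
    destruct n as [[L beta] [chn Hn]]. simpl in *. injection E1 as -> _.
    destruct (U2_corr (exist _ (L, y1) pf1)) as [m1 H1']. simpl in H1'. rewrite E2 in H1'.
    pose proof (Corr_snoc H1') as H1''. rewrite EL in Hc0. rewrite (Corr_fun H1'' Hc0) in H1'.
    pose proof (Corr_inj H1' Hc') as E. apply app_inj_tail in E. destruct E as [_ ->]. auto.
Qed.

Definition UH : Hom TT C := @mkHom TT C U0 U1 U2 U_s U_p U_t U_pb.


Lemma UH_comp : comp_eq c UH b.
Proof.
  split; [|split].
  - intros x. simpl. unfold U0. destruct (constructive_indefinite_description _ _) as [y [m [tm [Hm [Am Ey]]]]].
    simpl. subst y. pose proof Hm as [q [tq [tm' [A1 [B1 [C1 D1]]]]]].
    pose proof (Corr_top Hm A1 B1 Am) as E. apply (f_equal (@rc _)) in E. rewrite !fmap_rc in E.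
    rewrite E. f_equal. apply sig_eq. rewrite (Th_rc A1). auto.
  - intros n. simpl. unfold U1. destruct (constructive_indefinite_description _ _) as [y [m [ch [Hm Am]]]].
    simpl. pose proof Hm as [q [tq [tm' [A1 [B1 [C1 D1]]]]]].
    pose proof (Corr_top Hm A1 B1 Am) as E.
    destruct tq as [z|n' chq].
    { apply (f_equal (@top _)) in E. simpl in E. discriminate. }
    apply (f_equal (@top _)) in E. simpl in E. injection E as ->. f_equal.
    pose proof (proj2_sig n) as [chn Hn]. rewrite <- B1 in Hn.
    pose proof (Th_tau A1 Hn) as E2. apply (f_equal (@top _)) in E2. simpl in E2. injection E2 as E2.
    pose proof (Th_rc A1) as E3. simpl in E3.
    apply sig_eq. destruct n' as [[L' b'] pn']. destruct n as [[L b0] pn]. simpl in *. congruence.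
  - intros e. simpl. destruct (U2_corr e) as [m Hm].
    pose proof Hm as [q [tq [tm' [A1 [B1 [C1 D1]]]]]].
    destruct q as [|y0 q0] using rev_ind.
    { apply (f_equal (@length _)) in D1. rewrite length_map, length_app in D1. simpl in D1. lia. }
    clear IHq0. rewrite !map_app in D1. simpl in D1. apply app_inj_tail in D1. destruct D1 as [_ ->].
    f_equal. rewrite <- (app_nil_r (q0 ++ [y0])) in A1. rewrite <- app_assoc in A1. simpl in A1.
    pose proof (thin_elem WTh A1) as E. rewrite rcTh in E. simpl in E.
    rewrite map_app in B1. simpl in B1. apply app_inj_tail in B1. destruct B1 as [B1 B2].
    apply sig_eq. rewrite E. destruct e as [[l e0] pf]. simpl in *. f_equal; [exact B1 | exact B2].
Qed.


Local Notation EG bS := (Emb_G1 (g:=g) tinj sinj Mmax Mcol (b:=bS)).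
Local Notation BASE := (base g Mcol).

Lemma pi2_adr e : map pi2 (Adr AH e) = Adr g e.
Proof.
  destruct (Emb_addr (EG (pp S e)) (Adr_leaf g e)) as [t T1]. exact (liftaddr_map T1).
Qed.

Lemma pi2_gad l : map pi2 (Gad AH l) = Gad g l.
Proof. induction l; simpl; auto. rewrite map_app. f_equal; [apply pi2_adr | exact IHl]. Qed.

Lemma Corr_gad lS t : At mu lS t -> Corr (Gad g lS) (Gad a lS).
Proof.
  intros H. exists (Gad AH lS), (ext AH t), (ext a t). split; [apply ext_At; auto|].
  split; [apply pi2_gad|]. split; [apply ext_At; auto|]. apply (FE_gad FE).
Qed.

Lemma U2map q' : forall Q0 M0 M tq, At Th (Q0 ++ q') tq -> Corr (map pi2 Q0) M0 ->
  Corr (map pi2 (Q0 ++ q')) (M0 ++ M) -> length M = length q' -> map U2 q' = M.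
Proof.
  induction q' as [|y q'' IH]; intros Q0 M0 M tq A H0 H1 Len.
  - destruct M; simpl in *; auto; discriminate.
  - destruct M as [|x M']; simpl in Len; [discriminate|]. simpl.
    assert (Ey : proj1_sig y = (map pi2 Q0, pi2 y)).
    { pose proof (thin_elem WTh A) as E. rewrite rcTh in E. simpl in E. exact E. }
    assert (Hc : Corr (map pi2 (Q0 ++ [y])) (M0 ++ [x])).
    { replace (Q0 ++ y :: q'') with ((Q0 ++ [y]) ++ q'') in H1 by (rewrite <- app_assoc; auto).
      rewrite map_app in H1. destruct (Corr_app H1) as [m1 [m2 [E [Hm1 L1]]]].
      pose proof (Corr_len H0) as L0.
      replace (M0 ++ x :: M') with ((M0 ++ [x]) ++ M') in E by (rewrite <- app_assoc; auto).
      destruct (app_len_inv E) as [<- _]; [|exact Hm1].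
      rewrite L1, map_app, !length_app, <- L0. reflexivity. }
    f_equal.
    + apply U2_spec with (m := M0). rewrite Ey. simpl. rewrite map_app in Hc. exact Hc.
    + apply (IH (Q0 ++ [y]) (M0 ++ [x]) M' tq); auto.
      * rewrite <- app_assoc. exact A.
      * rewrite <- !app_assoc. exact H1.
Qed.


Lemma UH_G1 bS : fmapT UH (G1 AH bS) = G1 a bS.
Proof.
  destruct (nodeS tinj sinj Mmax Mcol bS) as [ch HN].
  set (lS := addrS Mcol (pt S bS)) in *.
  pose proof (ext_At AH HN) as HT. rewrite ext_node in HT.
  pose proof (ext_At a HN) as HC. rewrite ext_node in HC.
  assert (WG : wc (G1 AH bS)) by apply G1_wc.
  assert (RG : proj1_sig (rc (G1 AH bS)) = map pi2 (Gad AH lS)).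
  { rewrite pi2_gad. exact (lift_rc (EG bS)). }
  apply ptree_ext. intros Q t HQ.
  destruct (fmap_At_inv HQ) as [q' [t0 [-> [Aq ->]]]].
  pose proof (fmap_At b Aq) as H1. rewrite <- (FE_G1 FE bS) in H1.
  destruct (fmap_At_inv H1) as [M [t' [EM [AM Et]]]].
  assert (A1 : At Th (Gad AH lS ++ q') (subst t0 (fun l' => extf AH ch (q' ++ l')))).
  { apply At_app. eexists; split; [exact HT|]. apply subst_At. exact Aq. }
  assert (A2 : At sC (Gad a lS ++ M) (subst t' (fun l' => extf a ch (M ++ l')))).
  { apply At_app. eexists; split; [exact HC|]. apply subst_At. exact AM. }
  assert (Hc : Corr (map pi2 (Gad AH lS ++ q')) (Gad a lS ++ M)).
  { eexists; eexists; eexists. split; [exact A1|]. split; [reflexivity|]. split; [exact A2|].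
    rewrite !map_app, (FE_gad FE), EM. reflexivity. }
  assert (H0c : Corr (map pi2 (Gad AH lS)) (Gad a lS)).
  { rewrite pi2_gad. destruct (addrS_spec Mcol (pt S bS)) as [tt [Htt _]]. exact (Corr_gad Htt). }
  assert (LM : length M = length q').
  { apply (f_equal (@length _)) in EM. rewrite !length_map in EM. symmetry. exact EM. }
  replace (map (h2 UH) q') with M by (symmetry; exact (U2map A1 H0c Hc LM)).
  exists t'. split; [exact AM|].
  assert (Rt0 : proj1_sig (rc t0) = map pi2 (Gad AH lS ++ q')).
  { rewrite (thin WG Aq), RG, map_app. reflexivity. }
  destruct t0 as [z|n ch0].
  - destruct t' as [w|y ch']; [|simpl in Et; discriminate].
    simpl. f_equal. simpl in Rt0.
    assert (Hz : Corr (proj1_sig z) (Gad a lS ++ M)) by (rewrite Rt0; exact Hc).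
    rewrite (U0_spec Hz A2). simpl. rewrite app_nil_r.
    destruct (Adr_surj AM) as [e [E1 E2]]. subst M.
    pose proof (extf_val a ch (exist _ e E1)) as V. simpl in V. rewrite V.
    assert (W1 : wc (ch (exist _ e E1))) by (apply (At_wc (proj1 Mmax) HN)).
    rewrite (proj2 (ext_wc a W1)). rewrite (proj1 (At_wc (proj1 Mmax) HN (exist _ e E1))).
    pose proof (Adr_leaf a e) as L. rewrite E1 in L. pose proof (At_det AM L) as E. injection E. auto.
  - destruct t' as [w|y ch']; [simpl in Et; discriminate|].
    simpl. f_equal. simpl in Rt0.
    assert (Hn : Corr (fst (proj1_sig n)) (Gad a lS ++ M)) by (rewrite Rt0; exact Hc).
    exact (U1_spec Hn A2).
Qed.


Lemma UH_Fcomp1 : Fcomp_eq1 UH AH a.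
Proof.
  split; [|split].
  - intros x. simpl. destruct (addrS_spec Mcol x) as [t [H E]].
    pose proof (Corr_gad H) as Hc. pose proof (ext_At a H) as Ha.
    change (U0 (a0 g Mcol x) = h0 a x). rewrite (U0_spec (x:=a0 g Mcol x) Hc Ha).
    rewrite (proj2 (ext_wc a (At_wc (proj1 Mmax) H))). congruence.
  - intros x. unfold Fm1, raw1. apply UH_G1.
  - intros e. unfold Fm2, raw2. rewrite (h2_fst AH e), (h2_fst a e). f_equal.
    + apply UH_G1.
    + set (lS := addrS Mcol (pt S (pp S e))).
      assert (Eg : forall X (h : Hom S (F X)), Gad h lS ++ Adr h e = Gad h (addrS Mcol (ps S e))).
      { intros X h. unfold lS. rewrite (addrS_child tinj sinj Mmax Mcol e), Gad_app. simpl. rewrite app_nil_r. auto. }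
      destruct (addrS_spec Mcol (ps S e)) as [t [H _]].
      destruct (addrS_spec Mcol (pt S (pp S e))) as [t0 [H0 _]].
      change (map U2 (Adr AH e) = Adr a e).
      apply (U2map (Q0 := Gad AH lS) (M0 := Gad a lS) (tq := ext AH t)).
      * rewrite Eg. apply ext_At. auto.
      * rewrite pi2_gad. exact (Corr_gad H0).
      * rewrite !Eg, pi2_gad. exact (Corr_gad H).
      * pose proof (FE_adr FE e) as E. apply (f_equal (@length _)) in E. rewrite !length_map in E. exact E.
Qed.


Lemma node_cover (n : TT1 tau) : exists bS q ch, At (G1 AH bS) q (@PNode TT n ch).
Proof.
  destruct n as [[L beta] pf]. pose proof pf as [chn Hn]. simpl in Hn.
  destruct (cover sinj Mmax Mcol Hn) as [bS [Lrel [ch' [EL Hrel]]]].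
  pose proof (lift_At (EG bS) Hrel) as HL.
  pose proof (Emb_root (Emb_sub (EG bS) Hrel)) as Hr. simpl in Hr.
  rewrite (lift_node ch' Hr) in HL. exists bS. eexists. eexists.
  assert (Eex : (exist (fun lb : list (P2 T) * P1 T => exists ch, At tau (fst lb) (PNode (snd lb) ch)) (BASE bS ++ Lrel, beta) Hr : TT1 tau) = exist (fun lb : list (P2 T) * P1 T => exists ch, At tau (fst lb) (PNode (snd lb) ch)) (L, beta) pf).
  { apply sig_eq. simpl. rewrite EL. reflexivity. }
  rewrite Eex in HL. exact HL.
Qed.

Lemma hom_unique (u1 u2 : Hom TT C) : comp_eq c u1 b -> Fcomp_eq1 u1 AH a ->
  comp_eq c u2 b -> Fcomp_eq1 u2 AH a -> hom_eq u1 u2.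
Proof.
  intros C1 F1' C2 F2'.
  assert (E1 : forall n, h1 u1 n = h1 u2 n).
  { intros n. destruct (node_cover n) as [bS [q [ch H]]].
    pose proof (fmap_At u1 H) as H1. pose proof (fmap_At u2 H) as H2.
    pose proof (proj1 (proj2 F1') bS) as G1'. pose proof (proj1 (proj2 F2') bS) as G2'.
    unfold Fm1, raw1 in G1', G2'. change (proj1_sig (h1 AH bS)) with (G1 AH bS) in G1', G2'.
    rewrite G1' in H1. rewrite G2' in H2.
    assert (Eq : map (h2 u1) q = map (h2 u2) q).
    { eapply (fmap_inj (c:=c) H1 H2). rewrite !map_map. apply map_ext. intros e.
      rewrite (proj2 (proj2 C1) e), (proj2 (proj2 C2) e). reflexivity. }
    rewrite Eq in H1. pose proof (At_det H1 H2) as E. apply (f_equal (@top _)) in E.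
    simpl in E. congruence. }
  assert (E2 : forall e, h2 u1 e = h2 u2 e).
  { intros e. pose proof (h_p u1 e) as P1. pose proof (h_p u2 e) as P2. rewrite E1 in P1.
    destruct (h_pb c (pp C (h2 u1 e)) (h2 c (h2 u1 e)) (h_p c _)) as [x [_ Ux]].
    rewrite <- (Ux (h2 u1 e) (conj eq_refl eq_refl)). apply Ux. split.
    - congruence.
    - rewrite (proj2 (proj2 C1) e), (proj2 (proj2 C2) e). reflexivity. }
  split; [|split; auto].
  intros x. destruct (proj1_sig x) as [|e0 l] eqn:Ex using rev_ind.
  - assert (x = a0 g Mcol (rc mu)) as ->.
    { apply sig_eq. rewrite Ex. simpl. rewrite addrS_root; auto. }
    change (h0 u1 (h0 AH (rc mu)) = h0 u2 (h0 AH (rc mu))).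
    rewrite (proj1 F1'), (proj1 F2'). reflexivity.
  - clear IHl. pose proof (proj2_sig x) as pf. simpl in pf. rewrite Ex in pf.
    set (e := exist (fun le : list (P2 T) * P2 T => exists t, At tau (fst le ++ [snd le]) t) (l, e0) pf : TT2 tau).
    assert (x = Tps e) as -> by (apply sig_eq; simpl; auto).
    change (h0 u1 (ps TT e) = h0 u2 (ps TT e)). rewrite <- !h_s. rewrite E2. reflexivity.
Qed.

End Gen.

Arguments hinv : simpl never.

Section Comp.
Variables (A B C : PolyEnd) (d : Hom B C) (h : Hom A B).

Lemma comp_pb (b : P1 A) (e'' : P2 C) : pp C e'' = h1 d (h1 h b) ->
  exists! e : P2 A, pp A e = b /\ h2 d (h2 h e) = e''.
Proof.
  intros E. destruct (h_pb d (h1 h b) e'' E) as [e' [[E1 E2] U1]].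
  destruct (h_pb h b e' E1) as [e [[F1 F2] U2]].
  exists e. split; [split; congruence|]. intros x [X1 X2].
  apply U2. split; auto. symmetry. apply U1. split; auto. rewrite h_p, X1. auto.
Qed.

Definition compH : Hom A C.
Proof.
  refine (@mkHom A C (fun x => h0 d (h0 h x)) (fun x => h1 d (h1 h x)) (fun x => h2 d (h2 h x))
            _ _ _ comp_pb).
  - intros e. rewrite h_s, h_s. auto.
  - intros e. rewrite h_p, h_p. auto.
  - intros x. rewrite h_t, h_t. auto.
Defined.

Lemma fmap_comp s : fmapT compH s = fmapT d (fmapT h s).
Proof.
  apply ptree_ext. intros L t H. destruct (fmap_At_inv H) as [l [t0 [-> [H0 ->]]]].
  exists (fmapT d (fmapT h t0)). split.
  - simpl. rewrite <- map_map. apply fmap_At. apply fmap_At. auto.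
  - rewrite !fmap_top. destruct t0; reflexivity.
Qed.

End Comp.

Lemma fmap_homeq (A B : PolyEnd) (h h' : Hom A B) s : hom_eq h h' -> fmapT h s = fmapT h' s.
Proof.
  intros [E0 [E1 E2]]. apply ptree_ext. intros L t H. destruct (fmap_At_inv H) as [l [t0 [-> [H0 ->]]]].
  exists (fmapT h' t0). split.
  - replace (map (h2 h) l) with (map (h2 h') l) by (apply map_ext; auto). apply fmap_At. auto.
  - rewrite !fmap_top. destruct t0; simpl; congruence.
Qed.

Section Inv.
Variables (A B : PolyEnd) (p : Hom A B).
Hypothesis i0 : forall x y, h0 p x = h0 p y -> x = y.
Hypothesis i1 : forall x y, h1 p x = h1 p y -> x = y.
Hypothesis i2 : forall x y, h2 p x = h2 p y -> x = y.
Hypothesis s0 : forall y, exists x, h0 p x = y.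
Hypothesis s1 : forall y, exists x, h1 p x = y.
Hypothesis s2 : forall y, exists x, h2 p x = y.

Definition j0 y := proj1_sig (constructive_indefinite_description _ (s0 y)).
Definition j1 y := proj1_sig (constructive_indefinite_description _ (s1 y)).
Definition j2 y := proj1_sig (constructive_indefinite_description _ (s2 y)).
Lemma j0_spec y : h0 p (j0 y) = y.
Proof. unfold j0. destruct (constructive_indefinite_description _ _). auto. Qed.
Lemma j1_spec y : h1 p (j1 y) = y.
Proof. unfold j1. destruct (constructive_indefinite_description _ _). auto. Qed.
Lemma j2_spec y : h2 p (j2 y) = y.
Proof. unfold j2. destruct (constructive_indefinite_description _ _). auto. Qed.

Lemma j_pb (b : P1 B) (e' : P2 A) : pp A e' = j1 b -> exists! e, pp B e = b /\ j2 e = e'.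
Proof.
  intros E. exists (h2 p e'). split.
  - split.
    + rewrite h_p, E. apply j1_spec.
    + apply i2. apply j2_spec.
  - intros x [X1 X2]. rewrite <- X2. apply j2_spec.
Qed.

Definition invH : Hom B A.
Proof.
  refine (@mkHom B A j0 j1 j2 _ _ _ j_pb).
  - intros e. apply i0. rewrite <- h_s, !j0_spec, j2_spec. auto.
  - intros e. apply i1. rewrite <- h_p, !j1_spec, j2_spec. auto.
  - intros x. apply i0. rewrite <- h_t, !j0_spec, j1_spec. auto.
Defined.

Lemma inv_left : hom_eq (compH p invH) (idH B).
Proof. split; [|split]; intros; simpl; [apply j0_spec | apply j1_spec | apply j2_spec]. Qed.

Lemma inv_right : hom_eq (compH invH p) (idH A).
Proof. split; [|split]; intros; simpl; [apply i0, j0_spec | apply i1, j1_spec | apply i2, j2_spec]. Qed.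

End Inv.

Arguments hinv : simpl never.

Lemma Fp_parts (S A T : PolyEnd) (a' : Hom S (F A)) (g : Hom S (F T)) (p : Hom A T) :
  Fcomp_eq p a' (idH T) g ->
  (forall x, h0 p (h0 a' x) = h0 g x) /\
  (forall x, fmapT p (raw1 (h1 a' x)) = raw1 (h1 g x)) /\
  (forall x, fmapT p (fst (raw2 (h2 a' x))) = fst (raw2 (h2 g x)) /\
             map (h2 p) (snd (raw2 (h2 a' x))) = snd (raw2 (h2 g x))).
Proof.
  intros [E0 [E1 E2]]. split; [|split].
  - intros x. rewrite E0. reflexivity.
  - intros x. specialize (E1 x). unfold Fm1 in E1. rewrite fmap_id in E1. exact E1.
  - intros x. specialize (E2 x). unfold Fm2 in E2. rewrite fmap_id, map_id in E2.
    injection E2. auto.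
Qed.

Lemma transfer (S A T : PolyEnd) (a' : Hom S (F A)) (g : Hom S (F T)) (p : Hom A T) (j : Hom T A) :
  generic a' -> hom_eq (compH p j) (idH T) -> hom_eq (compH j p) (idH A) ->
  Fcomp_eq p a' (idH T) g -> generic g.
Proof.
  intros Ga Hl Hr Fp C D FC FD a c b FE.
  destruct (Fp_parts Fp) as [P0 [P1 P2]].
  destruct FE as [E0 [E1 E2]].
  assert (FE' : Fcomp_eq c a (compH b p) a').
  { split; [|split].
    - intros x. simpl. rewrite P0. auto.
    - intros x. rewrite E1. unfold Fm1. rewrite fmap_comp. f_equal. symmetry. apply P1.
    - intros x. rewrite E2. unfold Fm2. destruct (P2 x) as [Q1 Q2]. unfold raw2 in Q1, Q2. simpl in Q1, Q2.
      f_equal.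
      + rewrite fmap_comp, Q1. reflexivity.
      + change (h2 (compH b p)) with (fun e => h2 b (h2 p e)). rewrite <- (map_map (h2 p) (h2 b)). rewrite Q2. reflexivity. }
  destruct (Ga C D FC FD a c (compH b p) FE') as [u' [Cu [Fu Uu]]].
  destruct Hl as [L0 [L1 L2]]. destruct Hr as [R0 [R1 R2]]. simpl in L0, L1, L2, R0, R1, R2.
  assert (Ej : forall s, fmapT j (fmapT p s) = s).
  { intros s. rewrite <- fmap_comp, (@fmap_homeq A A (compH j p) (idH A) s (conj R0 (conj R1 R2))). apply fmap_id. }
  exists (compH u' j). split; [|split].
  - destruct Cu as [C0 [C1 C2]]. split; [|split]; intros y; simpl.
    + rewrite C0. simpl. rewrite L0. auto.
    + rewrite C1. simpl. rewrite L1. auto.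
    + rewrite C2. simpl. rewrite L2. auto.
  - destruct Fu as [G0 [G1 G2]]. split; [|split].
    + intros x. simpl. rewrite <- P0, R0. apply G0.
    + intros x. unfold Fm1. rewrite fmap_comp. unfold raw1 in P1 |- *. rewrite <- P1. rewrite Ej. apply G1.
    + intros x. destruct (P2 x) as [Q1 Q2]. unfold raw2 in Q1, Q2. simpl in Q1, Q2.
      rewrite <- (G2 x). unfold Fm2. f_equal.
      * rewrite fmap_comp. f_equal. rewrite <- Q1. apply Ej.
      * rewrite <- Q2. rewrite map_map. apply map_ext. intros; simpl; rewrite R2; auto.
  - intros u'' Cu'' Fu''.
    assert (W : hom_eq (compH u'' p) u').
    { apply Uu.
      - destruct Cu'' as [C0 [C1 C2]]. split; [|split]; intros y; simpl; auto.
      - destruct Fu'' as [G0 [G1 G2]]. split; [|split].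
        + intros x. simpl. rewrite P0. apply G0.
        + intros x. unfold Fm1. rewrite fmap_comp. unfold raw1 in P1. rewrite P1. apply G1.
        + intros x. unfold Fm2. rewrite fmap_comp.
          change (h2 (compH u'' p)) with (fun e => h2 u'' (h2 p e)). rewrite <- map_map.
          destruct (P2 x) as [Q1 Q2]. unfold raw2 in Q1, Q2. simpl in Q1, Q2. rewrite Q1, Q2. apply G2. }
    destruct W as [W0 [W1 W2]]. simpl in W0, W1, W2.
    split; [|split]; intros y; simpl.
    + rewrite <- W0, L0. auto.
    + rewrite <- W1, L1. auto.
    + rewrite <- W2, L2. auto.
Qed.

Arguments hinv : simpl never.

Lemma aH_generic (S T : PolyEnd) (g : Hom S (F T)) (mu : ptree S) tinj sinj Mmax Mcol :
  generic (aH g (mu:=mu) tinj sinj Mmax Mcol).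
Proof.
  intros C D FC FD a c b FE. exists (UH FE). split; [apply UH_comp|]. split; [apply UH_Fcomp1|].
  intros u' C' F'. apply (hom_unique C' F' (UH_comp FE) (UH_Fcomp1 FE)).
Qed.

Section Bij.
Variables (T : PolyEnd) (tau : ptree T) (Wt : wc tau).
Hypothesis sinjT : forall e e', ps T e = ps T e' -> e = e'.
Hypothesis Troot : forall x y, is_root T x -> is_root T y -> x = y.
Hypothesis Tmax : is_max_subtree tau.

Local Notation PI := (piH Wt).

Lemma pi_i0 (x y : TT0 tau) : h0 PI x = h0 PI y -> x = y.
Proof.
  destruct x as [l1 pf1], y as [l2 pf2]. pose proof pf1 as [t1 H1]. pose proof pf2 as [t2 H2].
  simpl. rewrite (col_spec (x:=exist _ l1 pf1) H1), (col_spec (x:=exist _ l2 pf2) H2). intros E.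
  apply sig_eq. simpl. exact (addr_unique sinjT (proj1 Tmax) (proj1 (proj2 Tmax)) H1 H2 E).
Qed.

Lemma pi_i1 (x y : TT1 tau) : h1 PI x = h1 PI y -> x = y.
Proof.
  destruct x as [[l1 b1] [c1 H1]], y as [[l2 b2] [c2 H2]]. simpl in *. intros ->.
  assert (l1 = l2) as -> by (exact (addr_unique sinjT (proj1 Tmax) (proj1 (proj2 Tmax)) H1 H2 eq_refl)).
  apply sig_eq. auto.
Qed.

Lemma pi_i2 (x y : TT2 tau) : h2 PI x = h2 PI y -> x = y.
Proof.
  destruct x as [[l1 e1] [t1 H1]], y as [[l2 e2] [t2 H2]]. simpl in *. intros ->.
  pose proof (At_wc_rc Wt H1) as R1. pose proof (At_wc_rc Wt H2) as R2.
  pose proof (addr_unique sinjT (proj1 Tmax) (proj1 (proj2 Tmax)) H1 H2 (eq_trans R1 (eq_sym R2))) as E.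
  apply app_inj_tail in E. destruct E as [-> _]. apply sig_eq. auto.
Qed.

Lemma pi_s1 (y : P1 T) : exists x, h1 PI x = y.
Proof.
  destruct (node_in_At (proj2 (proj2 Tmax) y)) as [l [ch H]].
  exists (exist (fun lb : list (P2 T) * P1 T => exists ch, At tau (fst lb) (PNode (snd lb) ch)) (l, y) (ex_intro _ ch H)).
  reflexivity.
Qed.

Lemma child_At l e ch : At tau l (PNode (pp T e) ch) -> At tau (l ++ [e]) (ch (exist _ e eq_refl)).
Proof. intros H. apply At_app. eexists. split; [exact H|]. simpl. exists eq_refl. reflexivity. Qed.

Lemma pi_s2 (y : P2 T) : exists x, h2 PI x = y.
Proof.
  destruct (node_in_At (proj2 (proj2 Tmax) (pp T y))) as [l [ch H]].
  exists (exist (fun le : list (P2 T) * P2 T => exists t, At tau (fst le ++ [snd le]) t) (l, y)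
           (ex_intro _ _ (child_At H))).
  reflexivity.
Qed.

Lemma pi_s0 (y : P0 T) : exists x, h0 PI x = y.
Proof.
  destruct (excluded_middle_informative (exists e, ps T e = y)) as [[e E]|N].
  - destruct (node_in_At (proj2 (proj2 Tmax) (pp T e))) as [l [ch H]].
    pose proof (child_At H) as H2.
    exists (exist (fun l => exists t, At tau l t) (l ++ [e]) (ex_intro _ _ H2)).
    transitivity (rc (ch (exist _ e eq_refl))); [apply col_spec; exact H2|].
    rewrite (At_wc_rc Wt H2). auto.
  - exists (exist (fun l => exists t, At tau l t) [] (ex_intro _ tau eq_refl)).
    transitivity (rc tau); [apply col_spec; reflexivity|].
    apply Troot; [apply (proj1 (proj2 Tmax))|]. intros [e E]. apply N. eauto.
Qed.

End Bij.


Theorem part2 : forall (S T : PolyEnd), is_tree S -> is_tree T ->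
     forall g : Hom S (F T), boundary_preserving g -> generic g.
Proof.
  intros S T TS TT g BP.
  destruct (tree_max TS) as [mu [Mmax Mcol]].
  pose proof TS as [_ [_ [_ [tinj [sinj _]]]]].
  pose proof TT as [_ [_ [_ [_ [sinjT [[r [Rr Ru]] _]]]]]].
  assert (Troot : forall x y, is_root T x -> is_root T y -> x = y) by (intros x y Hx Hy; rewrite (Ru _ Hx), (Ru _ Hy); auto).
  pose proof (BP mu Mmax) as Tmax.
  pose (Wt0 := Wt g Mmax).
  pose (p := piH Wt0).
  assert (i0 := fun x y => @pi_i0 _ _ Wt0 sinjT Tmax x y).
  assert (i1 := fun x y => @pi_i1 _ _ Wt0 sinjT Tmax x y).
  assert (i2 := fun x y => @pi_i2 _ _ Wt0 sinjT Tmax x y).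
  assert (s0 := pi_s0 Wt0 Troot Tmax).
  assert (s1 := pi_s1 Wt0 Tmax).
  assert (s2 := pi_s2 Wt0 Tmax).
  apply (@transfer S _ T (aH g tinj sinj Mmax Mcol) g p (@invH (Tt (tau g mu)) T p i0 i1 i2 s0 s1 s2)).
  - apply aH_generic.
  - apply (@inv_left (Tt (tau g mu)) T p).
  - apply (@inv_right (Tt (tau g mu)) T p).
  - apply aH_Fcomp.
Qed.

Lemma tree_finitary (T : PolyEnd) : is_tree T -> finitary T.
Proof. intros [_ [_ [[L HL] _]]] b. exists L. intros e _. apply HL. Qed.

Theorem mainTheorem17 :
  (forall (S T : PolyEnd), is_tree S -> is_tree T ->
     forall g : Hom S (F T), generic g <-> boundary_preserving g) /\
  (forall (S T : PolyEnd), is_tree S -> is_tree T ->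
     forall g : Hom S (F T), boundary_preserving g -> generic g) /\
  (forall (S R : PolyEnd), is_tree S -> finitary R ->
     forall g : Hom S (F R), generic g -> is_tree R /\ boundary_preserving g).
Proof.
  split; [|split].
  - intros S T TS TT g. split.
    + intros G. exact (proj2 (part3 TS (tree_finitary TT) G)).
    + apply part2; auto.
  - exact part2.
  - exact part3.
Qed.
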